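(* Let $n,m,N$ be positive integers with $n>m$ and $\frac{n-1}{n-m}\leq N\leq m$. For almost all $X_0\in\mathbb{C}^{m\times N}$ and $A\in\mathbb{C}^{n\times m}$ (outside a Lebesgue-null set), the $(1+n(N-1))\times mN$ matrix \[ \begin{bmatrix} \operatorname{vec}(X_0)^*\\ D(A^{(1,:)},X_0)\\ \vdots\\ D(A^{(n,:)},X_0) \end{bmatrix} \] has full column rank $mN$.
   Context: $\operatorname{vec}(X)$ is the column vector obtained by stacking the columns of $X$; $^*$ denotes conjugate transpose; $\otimes$ is the Kronecker product. $A^{(k,:)}\in\mathbb{C}^{1\times m}$ is the $k$th row of $A$ and $X_0^{(:,j)}$ the $j$th column of $X_0$. For a row vector $a\in\mathbb{C}^{1\times m}$ and $X_0\in\mathbb{C}^{m\times N}$, $D(a,X_0)\in\mathbb{C}^{(N-1)\times mN}$ is defined as $D(a,X_0)=B\otimes a$, where $B\in\mathbb{C}^{(N-1)\times N}$ has, in its row $i-1$ (for $i=2,\dots,N$), entry $-aX_0^{(:,i)}$ in column $1$, entry $aX_0^{(:,1)}$ in column $i$, and zeros elsewhere. *)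

(* Defs.v *)
From Stdlib Require Import Reals Lra Lia Arith.
Open Scope R_scope.

Definition C := (R * R)%type.
Definition C0 : C := (0, 0).
Definition Cadd (z w : C) : C := (fst z + fst w, snd z + snd w).
Definition Cmul (z w : C) : C :=
  (fst z * fst w - snd z * snd w, fst z * snd w + snd z * fst w).
Definition Copp (z : C) : C := (- fst z, - snd z).
Definition Cconj (z : C) : C := (fst z, - snd z).

Fixpoint Csum (n : nat) (f : nat -> C) : C :=
  match n with O => C0 | S k => Cadd (Csum k f) (f k) end.

(* A matrix is given by its entries (0-based); dimensions are carried separately. *)
Definition cmat := nat -> nat -> C.

Definition rowcol (m : nat) (a : nat -> C) (X0 : cmat) (j : nat) : C :=
  Csum m (fun i => Cmul (a i) (X0 i j)).

(* B in R^{(N-1) x N}: 0-based row r (paper's row i-1 with i = r+2):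
   column 0 holds - a X0^{(:,r+1)}, column r+1 holds a X0^{(:,0)}, zero elsewhere. *)
Definition Bmat (m : nat) (a : nat -> C) (X0 : cmat) (r j : nat) : C :=
  if Nat.eqb j 0 then Copp (rowcol m a X0 (S r))
  else if Nat.eqb j (S r) then rowcol m a X0 0
  else C0.

(* D(a,X0) = B (x) a, a of size 1 x m: entry (r, j*m + i) = B r j * a i *)
Definition Dmat (m : nat) (a : nat -> C) (X0 : cmat) (r c : nat) : C :=
  Cmul (Bmat m a X0 r (c / m)%nat) (a (c mod m)%nat).

(* The (1 + n(N-1)) x mN matrix [vec(X0)^*; D(A^{(1,:)},X0); ...; D(A^{(n,:)},X0)].
   vec stacks columns: vec(X0) entry i + m*j is X0 i j. *)
Definition bigM (n m N : nat) (X0 A : cmat) (row col : nat) : C :=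
  if Nat.eqb row 0 then Cconj (X0 (col mod m)%nat (col / m)%nat)
  else Dmat m (fun i => A ((row - 1) / (N - 1))%nat i) X0
            ((row - 1) mod (N - 1))%nat col.

Definition full_column_rank (nr nc : nat) (M : cmat) : Prop :=
  forall v : nat -> C,
    (forall row, (row < nr)%nat -> Csum nc (fun c => Cmul (M row c) (v c)) = C0) ->
    forall c, (c < nc)%nat -> v c = C0.

(* Lebesgue null sets of R^d (points: functions nat -> R, first d coordinates) *)
Fixpoint Rprod (d : nat) (f : nat -> R) : R :=
  match d with O => 1 | S k => Rprod k f * f k end.
Fixpoint Rsum (K : nat) (f : nat -> R) : R :=
  match K with O => 0 | S k => Rsum k f + f k end.

Definition lebesgue_null (d : nat) (E : (nat -> R) -> Prop) : Prop :=
  forall eps, 0 < eps ->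
    exists a b : nat -> nat -> R,
      (forall p i, a p i <= b p i) /\
      (forall x, E x -> exists p, forall i, (i < d)%nat -> a p i <= x i <= b p i) /\
      (forall K, Rsum K (fun p => Rprod d (fun i => b p i - a p i)) <= eps).

(* Identification of C^{m x N} x C^{n x m} with R^(2mN + 2nm) *)
Definition decX (m : nat) (x : nat -> R) : cmat :=
  fun i j => (x (2 * (i + m * j))%nat, x (2 * (i + m * j) + 1)%nat).
Definition decA (n m N : nat) (x : nat -> R) : cmat :=
  fun k i => (x (2 * (m * N) + 2 * (k + n * i))%nat,
              x (2 * (m * N) + 2 * (k + n * i) + 1)%nat).

(* Main.v *)
Require Import Defs.
From Stdlib Require Import Reals.
Open Scope R_scope.
From Stdlib Require Import Lra Lia Arith ZArith Cantor IndefiniteDescription ClassicalDescription FunctionalExtensionality Classical.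
Require Import Defs.

Lemma Rabs_le_b x a : Rabs x <= a -> - a <= x <= a.
Proof. unfold Rabs; destruct (Rcase_abs x); intros; lra. Qed.

Lemma Rsum_ext K f g : (forall i, (i < K)%nat -> f i = g i) -> Rsum K f = Rsum K g.
Proof. induction K; simpl; intros H; [reflexivity|]. rewrite IHK by (intros; apply H; lia). rewrite H by lia. reflexivity. Qed.

Lemma Rsum_le K f g : (forall i, (i < K)%nat -> f i <= g i) -> Rsum K f <= Rsum K g.
Proof. induction K; simpl; intros H; [lra|]. assert (H1 := H K ltac:(lia)). assert (Rsum K f <= Rsum K g) by (apply IHK; intros; apply H; lia). lra. Qed.

Lemma Rsum_nonneg K f : (forall i, (i < K)%nat -> 0 <= f i) -> 0 <= Rsum K f.
Proof. induction K; simpl; intros H; [lra|]. assert (H1 := H K ltac:(lia)). assert (0 <= Rsum K f) by (apply IHK; intros; apply H; lia). lra. Qed.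

Lemma Rsum_plus K f g : Rsum K (fun i => f i + g i) = Rsum K f + Rsum K g.
Proof. induction K; simpl; [lra|]. rewrite IHK; lra. Qed.

Lemma Rsum_scal K c f : Rsum K (fun i => c * f i) = c * Rsum K f.
Proof. induction K; simpl; [lra|]. rewrite IHK; lra. Qed.

Lemma Rsum_add_len a b h : Rsum (a + b) h = Rsum a h + Rsum b (fun i => h (a + i)%nat).
Proof. induction b; simpl. rewrite Nat.add_0_r; lra. rewrite Nat.add_succ_r; simpl. rewrite IHb; lra. Qed.

Lemma Rsum_upd J a h : (a < J)%nat ->
  Rsum J (fun i => if Nat.eqb i a then 0 else h i) = Rsum J h - h a.
Proof.
  induction J; intros Ha; [lia|]. simpl.
  destruct (Nat.eq_dec a J) as [->|Hne].
  - rewrite Nat.eqb_refl. rewrite (Rsum_ext J _ h). lra.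
    intros i Hi. destruct (Nat.eqb_spec i J); [lia|reflexivity].
  - rewrite IHJ by lia. destruct (Nat.eqb_spec J a); [lia|]. lra.
Qed.

Lemma Rsum_inj K J (f : nat -> nat) : forall h,
  (forall i, 0 <= h i) -> (forall q, (q < K)%nat -> (f q < J)%nat) ->
  (forall q1 q2, (q1 < K)%nat -> (q2 < K)%nat -> f q1 = f q2 -> q1 = q2) ->
  Rsum K (fun q => h (f q)) <= Rsum J h.
Proof.
  induction K; intros h Hh Hf Hinj; simpl.
  - apply Rsum_nonneg; intros; apply Hh.
  - set (h' := fun i => if Nat.eqb i (f K) then 0 else h i).
    assert (EE : Rsum K (fun q => h (f q)) = Rsum K (fun q => h' (f q))).
    { apply Rsum_ext. intros i Hi. unfold h'. destruct (Nat.eqb_spec (f i) (f K)).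
      - apply Hinj in e; lia.
      - reflexivity. }
    assert (Hle : Rsum K (fun q => h' (f q)) <= Rsum J h').
    { apply IHK. intros i; unfold h'; destruct (Nat.eqb i (f K)); [lra|apply Hh].
      intros; apply Hf; lia. intros; apply Hinj; lia. }
    unfold h' at 2 in Hle. rewrite Rsum_upd in Hle by (apply Hf; lia). lra.
Qed.

Lemma pair_inj a b c e K : (b < K)%nat -> (e < K)%nat -> (a * K + b = c * K + e)%nat -> a = c /\ b = e.
Proof.
  intros Hb He H. destruct (lt_eq_lt_dec a c) as [[Hlt|Heq]|Hlt].
  - exfalso. assert (a * K + K <= c * K)%nat by nia. lia.
  - subst. lia.
  - exfalso. assert (c * K + K <= a * K)%nat by nia. lia.
Qed.

Lemma Rsum_double k K h : Rsum (k * K) h = Rsum k (fun a => Rsum K (fun p => h (a * K + p)%nat)).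
Proof.
  induction k; simpl; [reflexivity|].
  replace (K + k * K)%nat with (k * K + K)%nat by lia.
  rewrite Rsum_add_len, IHk. reflexivity.
Qed.

Lemma Rsum_geom K eps : 0 <= eps -> Rsum K (fun k => eps / 2 ^ (S k)) <= eps - eps / 2 ^ K.
Proof.
  intros He. induction K.
  - simpl. unfold Rdiv. rewrite Rinv_1. lra.
  - assert (P : 0 < 2 ^ K) by (apply pow_lt; lra).
    change (Rsum (S K) (fun k => eps / 2 ^ S k)) with (Rsum K (fun k => eps / 2 ^ S k) + eps / 2 ^ S K).
    replace (eps / 2 ^ S K) with (eps / 2 ^ K / 2) by (simpl; field; lra).
    lra.
Qed.

Lemma Rsum_geom' K eps : 0 <= eps -> Rsum K (fun k => eps / 2 ^ (S k)) <= eps.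
Proof.
  intros He. pose proof (Rsum_geom K eps He).
  assert (0 <= eps / 2 ^ K) by (apply Rmult_le_pos; [lra| apply Rlt_le, Rinv_0_lt_compat, pow_lt; lra]). lra.
Qed.

Lemma Rprod_nonneg d f : (forall i, (i < d)%nat -> 0 <= f i) -> 0 <= Rprod d f.
Proof. induction d; simpl; intros H; [lra|]. apply Rmult_le_pos; [apply IHd; intros; apply H; lia| apply H; lia]. Qed.

Lemma Rprod_ext d f g : (forall i, (i < d)%nat -> f i = g i) -> Rprod d f = Rprod d g.
Proof. induction d; simpl; intros H; [reflexivity|]. rewrite IHd by (intros; apply H; lia). rewrite H by lia. reflexivity. Qed.

Lemma Rprod_const d c : Rprod d (fun _ => c) = c ^ d.
Proof. induction d; simpl; [reflexivity|]. rewrite IHd; ring. Qed.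

Lemma null_mono d (E F : (nat -> R) -> Prop) :
  (forall x, E x -> F x) -> lebesgue_null d F -> lebesgue_null d E.
Proof.
  intros HEF HF eps He. destruct (HF eps He) as (a & b & H1 & H2 & H3).
  exists a, b. split; [|split]; auto.
Qed.

Lemma null_empty d (E : (nat -> R) -> Prop) : (0 < d)%nat -> (forall x, ~ E x) -> lebesgue_null d E.
Proof.
  intros Hd HE eps He. exists (fun _ _ => 0), (fun _ _ => 0). split; [|split].
  - intros; lra.
  - intros y Hy; exfalso; exact (HE y Hy).
  - intros K. destruct d; [lia|]. rewrite (Rsum_ext K _ (fun _ => 0)).
    + assert (Z : forall K, Rsum K (fun _ => 0) = 0) by (clear; induction K; simpl; [lra| rewrite IHK; lra]). rewrite Z. lra.
    + intros; simpl. ring.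
Qed.

Lemma null_union d (E : nat -> (nat -> R) -> Prop) :
  (forall k, lebesgue_null d (E k)) -> lebesgue_null d (fun x => exists k, E k x).
Proof.
  intros HE eps He.
  assert (Hc : forall k, exists ab : (nat -> nat -> R) * (nat -> nat -> R),
    (forall p i, fst ab p i <= snd ab p i) /\
    (forall x, E k x -> exists p, forall i, (i < d)%nat -> fst ab p i <= x i <= snd ab p i) /\
    (forall K, Rsum K (fun p => Rprod d (fun i => snd ab p i - fst ab p i)) <= eps / 2 ^ (S k))).
  { intros k. assert (Hpos : 0 < eps / 2 ^ (S k)) by (apply Rdiv_lt_0_compat; [lra| apply pow_lt; lra]).
    destruct (HE k _ Hpos) as (a & b & H1 & H2 & H3). exists (a, b). simpl. auto. }
  destruct (functional_choice _ Hc) as [F HF].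
  exists (fun q i => fst (F (fst (of_nat q))) (snd (of_nat q)) i),
         (fun q i => snd (F (fst (of_nat q))) (snd (of_nat q)) i).
  split; [|split].
  - intros q i. apply (HF _).
  - intros x [k Hk]. destruct (proj1 (proj2 (HF k)) x Hk) as [p Hp].
    exists (to_nat (k, p)). rewrite cancel_of_to. simpl. exact Hp.
  - intros K.
    set (g := fun k p => Rprod d (fun i => snd (F k) p i - fst (F k) p i)).
    assert (Hg : forall k p, 0 <= g k p).
    { intros k p. apply Rprod_nonneg. intros i _. pose proof (proj1 (HF k) p i). lra. }
    set (h := fun j => g (j / K)%nat (j mod K)%nat).
    set (f := fun q => (fst (of_nat q) * K + snd (of_nat q))%nat).
    assert (Hbound : forall q, (q < K)%nat -> (fst (of_nat q) < K)%nat /\ (snd (of_nat q) < K)%nat).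
    { intros q Hq. pose proof (to_nat_non_decreasing (fst (of_nat q)) (snd (of_nat q))).
      rewrite <- surjective_pairing, cancel_to_of in H. lia. }
    assert (Hle : Rsum K (fun q => h (f q)) <= Rsum (K * K) h).
    { apply Rsum_inj.
      - intros; apply Hg.
      - intros q Hq. destruct (Hbound q Hq). unfold f. nia.
      - intros q1 q2 H1 H2 Heq. destruct (Hbound q1 H1), (Hbound q2 H2). unfold f in Heq.
        assert (fst (of_nat q1) = fst (of_nat q2) /\ snd (of_nat q1) = snd (of_nat q2)) as [E1 E2] by (apply pair_inj with K; auto).
        rewrite <- (cancel_to_of q1), <- (cancel_to_of q2).
        rewrite (surjective_pairing (of_nat q1)), (surjective_pairing (of_nat q2)), E1, E2. reflexivity. }
    assert (EE : Rsum K (fun q => h (f q)) =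
                Rsum K (fun p => Rprod d (fun i => snd (F (fst (of_nat p))) (snd (of_nat p)) i -
                                                    fst (F (fst (of_nat p))) (snd (of_nat p)) i))).
    { apply Rsum_ext. intros q Hq. destruct (Hbound q Hq). unfold h, f, g.
      rewrite Nat.div_add_l by lia. rewrite Nat.div_small by lia. rewrite Nat.add_0_r.
      rewrite Nat.add_comm, Nat.Div0.mod_add. rewrite Nat.mod_small by lia. reflexivity. }
    rewrite <- EE. eapply Rle_trans; [exact Hle|].
    rewrite Rsum_double.
    eapply Rle_trans with (Rsum K (fun k => eps / 2 ^ S k)); [| apply Rsum_geom'; lra].
    apply Rsum_le. intros k Hk.
    rewrite (Rsum_ext K _ (fun p => g k p)).
    + apply (proj2 (proj2 (HF k))).
    + intros p Hp. unfold h. rewrite Nat.div_add_l by lia. rewrite Nat.div_small by lia.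
      rewrite Nat.add_0_r. rewrite Nat.add_comm, Nat.Div0.mod_add, Nat.mod_small by lia. reflexivity.
Qed.

Lemma null_cyl d (E : (nat -> R) -> Prop) : lebesgue_null d E -> lebesgue_null (S d) E.
Proof.
  intros HE.
  apply null_mono with (F := fun x => exists j : nat, E x /\ Rabs (x d) <= INR j).
  { intros x Hx. destruct (archimed (Rabs (x d))) as [H1 _].
    exists (Z.to_nat (up (Rabs (x d)))). split; auto.
    rewrite INR_IZR_INZ, Z2Nat.id. lra. apply le_IZR. pose proof (Rabs_pos (x d)). lra. }
  apply null_union. intros j eps He.
  set (w := 2 * INR j + 1).
  assert (Hw : 0 < w) by (unfold w; pose proof (pos_INR j); lra).
  destruct (HE (eps / w) ltac:(apply Rdiv_lt_0_compat; lra)) as (a & b & H1 & H2 & H3).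
  exists (fun p i => if Nat.eqb i d then - INR j else a p i),
         (fun p i => if Nat.eqb i d then INR j else b p i).
  split; [|split].
  - intros p i. destruct (Nat.eqb i d); [pose proof (pos_INR j); lra| apply H1].
  - intros x [Hx Hj]. destruct (H2 x Hx) as [p Hp]. exists p. intros i Hi.
    destruct (Nat.eqb_spec i d).
    + subst. apply Rabs_le_b in Hj. lra.
    + apply Hp; lia.
  - intros K. simpl. rewrite Nat.eqb_refl.
    rewrite (Rsum_ext K _ (fun p => Rprod d (fun i => b p i - a p i) * (INR j - - INR j))).
    + rewrite Rsum_ext with (g := fun p => (INR j - - INR j) * Rprod d (fun i => b p i - a p i))
        by (intros; ring).
      rewrite Rsum_scal. specialize (H3 K).
      assert (0 <= Rsum K (fun p => Rprod d (fun i => b p i - a p i))).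
      { apply Rsum_nonneg; intros q _; apply Rprod_nonneg; intros k _; pose proof (H1 q k); lra. }
      assert (Hjw : INR j - - INR j <= w) by (unfold w; lra).
      apply Rle_trans with (w * (eps / w)).
      * apply Rle_trans with ((INR j - - INR j) * (eps / w)).
        -- apply Rmult_le_compat_l; [pose proof (pos_INR j); lra| exact H3].
        -- apply Rmult_le_compat_r; [apply Rlt_le, Rdiv_lt_0_compat; lra | exact Hjw].
      * right. field. lra.
    + intros p Hp. f_equal. apply Rprod_ext. intros i Hi.
      destruct (Nat.eqb_spec i d); [lia|reflexivity].
Qed.

Inductive PolyR (d : nat) : ((nat -> R) -> R) -> Prop :=
| Pconst c : PolyR d (fun _ => c)
| Pvar i : (i < d)%nat -> PolyR d (fun x => x i)
| Padd f g : PolyR d f -> PolyR d g -> PolyR d (fun x => f x + g x)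
| Pmul f g : PolyR d f -> PolyR d g -> PolyR d (fun x => f x * g x).

Lemma Poly_ext d f g : PolyR d f -> (forall x, f x = g x) -> PolyR d g.
Proof. intros H E. replace g with f; auto. apply functional_extensionality; auto. Qed.

Lemma Poly_S d f : PolyR d f -> PolyR (S d) f.
Proof. induction 1; constructor; auto. Qed.

Lemma Poly_le d d' f : (d <= d')%nat -> PolyR d f -> PolyR d' f.
Proof. intros Hd; induction 1; try constructor; auto; lia. Qed.

Lemma Poly_dep d f : PolyR d f -> forall x y, (forall i, (i < d)%nat -> x i = y i) -> f x = f y.
Proof. induction 1; intros x y H'; auto; f_equal; auto. Qed.

Lemma Poly_opp d f : PolyR d f -> PolyR d (fun x => - f x).
Proof. intros H. apply Poly_ext with (fun x => (-1) * f x). constructor; auto. constructor. intros; ring. Qed.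

Lemma Poly_sub d f g : PolyR d f -> PolyR d g -> PolyR d (fun x => f x - g x).
Proof. intros. apply Poly_ext with (fun x => f x + - g x). constructor; auto. apply Poly_opp; auto. intros; ring. Qed.

Lemma Poly_pow d f k : PolyR d f -> PolyR d (fun x => f x ^ k).
Proof. intros H. induction k; simpl. constructor. constructor; auto. Qed.

Lemma Poly_Rsum d K F : (forall i, (i < K)%nat -> PolyR d (F i)) -> PolyR d (fun x => Rsum K (fun i => F i x)).
Proof. induction K; simpl; intros H. constructor. constructor. apply IHK; intros; apply H; lia. apply H; lia. Qed.

Definition inbox (d : nat) (B : R) (x : nat -> R) := forall i, (i < d)%nat -> Rabs (x i) <= B.
Definition norm1 (d : nat) (x y : nat -> R) := Rsum d (fun i => Rabs (x i - y i)).

Lemma norm1_nonneg d x y : 0 <= norm1 d x y.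
Proof. apply Rsum_nonneg; intros; apply Rabs_pos. Qed.

Lemma norm1_term d x y i : (i < d)%nat -> Rabs (x i - y i) <= norm1 d x y.
Proof.
  unfold norm1. induction d; intros Hi; [lia|]. simpl.
  assert (0 <= Rsum d (fun i0 => Rabs (x i0 - y i0))) by (apply Rsum_nonneg; intros; apply Rabs_pos).
  destruct (Nat.eq_dec i d). subst. lra.
  assert (Rabs (x i - y i) <= Rsum d (fun i0 => Rabs (x i0 - y i0))) by (apply IHd; lia).
  pose proof (Rabs_pos (x d - y d)). lra.
Qed.

Lemma Poly_lip d f : PolyR d f -> forall B, 0 <= B -> exists L M, 0 <= L /\ 0 <= M /\
  (forall x, inbox d B x -> Rabs (f x) <= M) /\
  (forall x y, inbox d B x -> inbox d B y -> Rabs (f x - f y) <= L * norm1 d x y).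
Proof.
  induction 1; intros B HB.
  - exists 0, (Rabs c). split; [lra|split;[apply Rabs_pos|split]].
    + intros; lra.
    + intros. replace (c - c) with 0 by ring. rewrite Rabs_R0. pose proof (norm1_nonneg d x y). nra.
  - exists 1, B. split; [lra|split;[lra|split]].
    + intros x Hx; apply Hx; auto.
    + intros x y _ _. pose proof (norm1_term d x y i H). lra.
  - destruct (IHPolyR1 B HB) as (L1 & M1 & HL1 & HM1 & Hb1 & Hl1).
    destruct (IHPolyR2 B HB) as (L2 & M2 & HL2 & HM2 & Hb2 & Hl2).
    exists (L1 + L2), (M1 + M2). split; [lra|split;[lra|split]].
    + intros x Hx. specialize (Hb1 x Hx); specialize (Hb2 x Hx).
      pose proof (Rabs_triang (f x) (g x)). lra.
    + intros x y Hx Hy. specialize (Hl1 x y Hx Hy); specialize (Hl2 x y Hx Hy).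
      replace (f x + g x - (f y + g y)) with ((f x - f y) + (g x - g y)) by ring.
      pose proof (Rabs_triang (f x - f y) (g x - g y)). lra.
  - destruct (IHPolyR1 B HB) as (L1 & M1 & HL1 & HM1 & Hb1 & Hl1).
    destruct (IHPolyR2 B HB) as (L2 & M2 & HL2 & HM2 & Hb2 & Hl2).
    exists (M1 * L2 + M2 * L1), (M1 * M2). split; [nra|split;[nra|split]].
    + intros x Hx. specialize (Hb1 x Hx); specialize (Hb2 x Hx). rewrite Rabs_mult.
      apply Rmult_le_compat; auto; apply Rabs_pos.
    + intros x y Hx Hy. specialize (Hl1 x y Hx Hy); specialize (Hl2 x y Hx Hy).
      pose proof (Hb1 x Hx); pose proof (Hb2 y Hy).
      replace (f x * g x - f y * g y) with (f x * (g x - g y) + g y * (f x - f y)) by ring.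
      eapply Rle_trans; [apply Rabs_triang|]. rewrite !Rabs_mult.
      pose proof (norm1_nonneg d x y).
      assert (Rabs (f x) * Rabs (g x - g y) <= M1 * (L2 * norm1 d x y))
        by (apply Rmult_le_compat; auto; apply Rabs_pos).
      assert (Rabs (g y) * Rabs (f x - f y) <= M2 * (L1 * norm1 d x y))
        by (apply Rmult_le_compat; auto; apply Rabs_pos).
      nra.
Qed.

Inductive Dec (d : nat) : ((nat -> R) -> R) -> Prop :=
| Dterm c k : PolyR d c -> Dec d (fun x => c x * x d ^ k)
| Dadd f g : Dec d f -> Dec d g -> Dec d (fun x => f x + g x).

Lemma Dec_ext d f g : Dec d f -> (forall x, f x = g x) -> Dec d g.
Proof. intros H E. replace g with f; auto. apply functional_extensionality; auto. Qed.

Lemma Dec_mul d f g : Dec d f -> Dec d g -> Dec d (fun x => f x * g x).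
Proof.
  intros Hf. induction Hf as [c k Hc | f1 f2 H1 IH1 H2 IH2]; intros Hg.
  - induction Hg as [e l He | g1 g2 G1 IG1 G2 IG2].
    + apply Dec_ext with (fun x => (c x * e x) * x d ^ (k + l)).
      constructor. constructor; auto. intros; rewrite pow_add; ring.
    + apply Dec_ext with (fun x => c x * x d ^ k * g1 x + c x * x d ^ k * g2 x).
      constructor; auto. intros; ring.
  - apply Dec_ext with (fun x => f1 x * g x + f2 x * g x). constructor; auto. intros; ring.
Qed.

Lemma Poly_Dec d f : PolyR (S d) f -> Dec d f.
Proof.
  induction 1.
  - apply Dec_ext with (fun x => c * x d ^ 0). constructor. constructor. intros; simpl; ring.
  - destruct (Nat.eq_dec i d).
    + subst. apply Dec_ext with (fun x => 1 * x d ^ 1). constructor. constructor. intros; simpl; ring.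
    + apply Dec_ext with (fun x => x i * x d ^ 0). constructor. constructor; lia. intros; simpl; ring.
  - constructor; auto.
  - apply Dec_mul; auto.
Qed.

Lemma Rsum_trunc K K1 g : (K1 <= K)%nat -> Rsum K (fun i => if Nat.ltb i K1 then g i else 0) = Rsum K1 g.
Proof.
  intros H. induction K.
  - assert (K1 = 0)%nat by lia. subst. reflexivity.
  - destruct (Nat.eq_dec K1 (S K)).
    + subst. simpl. rewrite (Rsum_ext K _ g). destruct (Nat.ltb_spec K (S K)); [reflexivity|lia].
      intros i Hi. destruct (Nat.ltb_spec i (S K)); [reflexivity|lia].
    + simpl. rewrite IHK by lia. destruct (Nat.ltb_spec K K1); [lia|]. ring.
Qed.

Definition ev (d K : nat) (c : nat -> (nat -> R) -> R) (x : nat -> R) :=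
  Rsum K (fun i => c i x * x d ^ i).

Lemma Dec_coef d f : Dec d f -> exists K (c : nat -> (nat -> R) -> R),
  (forall i, PolyR d (c i)) /\ (forall i x, (K <= i)%nat -> c i x = 0) /\ (forall x, f x = ev d K c x).
Proof.
  induction 1 as [c k Hc | f g H1 IH1 H2 IH2].
  - exists (S k), (fun i => if Nat.eqb i k then c else (fun _ => 0)). split; [|split].
    + intros i. destruct (Nat.eqb i k); auto. constructor.
    + intros i x Hi. destruct (Nat.eqb_spec i k); [lia|reflexivity].
    + intros x. unfold ev. simpl. rewrite Nat.eqb_refl.
      rewrite (Rsum_ext k _ (fun _ => 0)). assert (Z : forall K, Rsum K (fun _ => 0) = 0)
        by (clear; induction K; simpl; [lra| rewrite IHK; lra]). rewrite Z. ring.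
      intros i Hi. destruct (Nat.eqb_spec i k); [lia|]. ring.
  - destruct IH1 as (K1 & c1 & P1 & S1 & E1). destruct IH2 as (K2 & c2 & P2 & S2 & E2).
    exists (K1 + K2)%nat, (fun i x => c1 i x + c2 i x). split; [|split].
    + intros i. constructor; auto.
    + intros i x Hi. rewrite S1, S2 by lia. ring.
    + intros x. rewrite E1, E2. unfold ev.
      rewrite <- (Rsum_trunc (K1 + K2) K1) by lia. rewrite <- (Rsum_trunc (K1 + K2) K2) by lia.
      rewrite <- Rsum_plus. apply Rsum_ext. intros i Hi.
      destruct (Nat.ltb_spec i K1); destruct (Nat.ltb_spec i K2); try ring.
      rewrite (S2 i x) by lia. ring. rewrite (S1 i x) by lia. ring.
      rewrite (S1 i x), (S2 i x) by lia. ring.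
Qed.

Lemma Poly_ev d K c : (forall i, PolyR d (c i)) -> PolyR (S d) (ev d K c).
Proof.
  intros H. unfold ev. apply Poly_Rsum. intros i _. constructor. apply Poly_S; auto.
  apply Poly_pow. constructor. lia.
Qed.

Definition upd (d : nat) (x : nat -> R) (t : R) : nat -> R := fun i => if Nat.eqb i d then t else x i.

Lemma upd_same d x : upd d x (x d) = x.
Proof. apply functional_extensionality. intros i. unfold upd. destruct (Nat.eqb_spec i d); subst; auto. Qed.

Lemma upd_at d x t : upd d x t d = t.
Proof. unfold upd. rewrite Nat.eqb_refl. auto. Qed.

Lemma deriv_sum K (a : nat -> R) s :
  derivable_pt_lim (fun t => Rsum K (fun i => a i * t ^ i)) s (Rsum K (fun i => a i * (INR i * s ^ pred i))).
Proof.
  induction K; simpl.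
  - apply derivable_pt_lim_const.
  - apply (derivable_pt_lim_plus (fun t => Rsum K (fun i => a i * t ^ i)) (fun t => a K * t ^ K)).
    + exact IHK.
    + apply (derivable_pt_lim_scal (fun t => t ^ K)). apply derivable_pt_lim_pow.
Qed.

Definition dc (e : nat -> (nat -> R) -> R) : nat -> (nat -> R) -> R := fun i y => INR (S i) * e (S i) y.

Lemma Rsum_shift K f : Rsum (S K) f = f 0%nat + Rsum K (fun i => f (S i)).
Proof. induction K; simpl in *. ring. rewrite IHK. ring. Qed.

Lemma ev_deriv d K e x s :
  (forall i, PolyR d (e i)) -> (forall i y, (K <= i)%nat -> e i y = 0) ->
  derivable_pt_lim (fun t => ev d K e (upd d x t)) s (ev d K (dc e) (upd d x s)).
Proof.
  intros HP HS.
  assert (E1 : (fun t => ev d K e (upd d x t)) = (fun t => Rsum K (fun i => e i x * t ^ i))).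
  { apply functional_extensionality. intros t. unfold ev. apply Rsum_ext. intros i _.
    rewrite upd_at. f_equal. apply (Poly_dep d); auto. intros j Hj. unfold upd.
    destruct (Nat.eqb_spec j d); [lia|auto]. }
  rewrite E1.
  replace (ev d K (dc e) (upd d x s)) with (Rsum K (fun i => e i x * (INR i * s ^ pred i))).
  apply deriv_sum.
  unfold ev, dc. rewrite upd_at. destruct K. reflexivity.
  assert (A1 : Rsum (S K) (fun i => e i x * (INR i * s ^ pred i)) =
               Rsum K (fun i => e (S i) x * (INR (S i) * s ^ i))).
  { rewrite Rsum_shift. replace (e 0%nat x * (INR 0 * s ^ pred 0)) with 0 by (simpl; ring).
    rewrite Rplus_0_l. apply Rsum_ext. intros; reflexivity. }
  assert (A2 : Rsum (S K) (fun i => INR (S i) * e (S i) (upd d x s) * s ^ i) =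
               Rsum K (fun i => INR (S i) * e (S i) (upd d x s) * s ^ i)).
  { change (Rsum (S K) ?f) with (Rsum K f + f K). cbv beta. rewrite (HS (S K)) by lia. ring. }
  rewrite A1, A2. apply Rsum_ext. intros i _.
  rewrite (Poly_dep d (e (S i)) (HP _) (upd d x s) x). ring.
  intros j Hj. unfold upd. destruct (Nat.eqb_spec j d); [lia|auto].
Qed.

Definition dcn (j : nat) (c : nat -> (nat -> R) -> R) : nat -> (nat -> R) -> R :=
  fun i y => INR (fact (i + j)) / INR (fact i) * c (i + j)%nat y.

Lemma fact_pos' n : 0 < INR (fact n).
Proof. apply lt_0_INR, lt_O_fact. Qed.

Lemma dc_dcn j c i y : dc (dcn j c) i y = dcn (S j) c i y.
Proof.
  unfold dc, dcn. replace (S i + j)%nat with (i + S j)%nat by lia.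
  rewrite (fact_simpl i), mult_INR.
  pose proof (fact_pos' i). pose proof (fact_pos' (i + S j)). field.
  split; [lra|]. rewrite S_INR. pose proof (pos_INR i). lra.
Qed.

Lemma dcn_Poly d j c : (forall i, PolyR d (c i)) -> forall i, PolyR d (dcn j c i).
Proof. intros H i. unfold dcn. constructor. constructor. auto. Qed.

Lemma dcn_supp K j c : (forall i y, (K <= i)%nat -> c i y = 0) -> forall i y, (K <= i)%nat -> dcn j c i y = 0.
Proof. intros H i y Hi. unfold dcn. rewrite H by lia. ring. Qed.

Lemma ev_dcn_deriv d K j c x s :
  (forall i, PolyR d (c i)) -> (forall i y, (K <= i)%nat -> c i y = 0) ->
  derivable_pt_lim (fun t => ev d K (dcn j c) (upd d x t)) s (ev d K (dcn (S j) c) (upd d x s)).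
Proof.
  intros HP HS.
  replace (ev d K (dcn (S j) c) (upd d x s)) with (ev d K (dc (dcn j c)) (upd d x s)).
  apply ev_deriv. apply dcn_Poly; auto. apply dcn_supp; auto.
  unfold ev. apply Rsum_ext. intros. rewrite dc_dcn. auto.
Qed.

Lemma ev_dcn0 d K c x : ev d K (dcn 0 c) x = ev d K c x.
Proof.
  unfold ev, dcn. apply Rsum_ext. intros i _. rewrite Nat.add_0_r.
  pose proof (fact_pos' i). field. lra.
Qed.

Lemma ev_dcn_top d K k c x : (k < K)%nat -> (forall i y, (k < i)%nat -> c i y = 0) ->
  ev d K (dcn k c) x = INR (fact k) * c k x.
Proof.
  intros Hk H. unfold ev. destruct K; [lia|]. rewrite Rsum_shift.
  rewrite (Rsum_ext K _ (fun _ => 0)).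
  - assert (Z : forall K, Rsum K (fun _ => 0) = 0) by (clear; induction K; simpl; [lra| rewrite IHK; lra]).
    rewrite Z. unfold dcn. simpl. rewrite Rplus_0_r. field.
  - intros i _. unfold dcn. rewrite H by lia. ring.
Qed.

Lemma top_exists K (c : nat -> (nat -> R) -> R) :
  (exists i x, (i < K)%nat /\ c i x <> 0) ->
  exists k, (k < K)%nat /\ (exists x, c k x <> 0) /\ (forall i x, (k < i)%nat -> (i < K)%nat -> c i x = 0).
Proof.
  induction K; intros (i & x & Hi & Hx); [lia|].
  destruct (classic (exists y, c K y <> 0)) as [[y Hy]|Hn].
  - exists K. split; [lia|split]. exists y; auto. intros; lia.
  - destruct (Nat.eq_dec i K). subst. exfalso; apply Hn; exists x; auto.
    destruct IHK as (k & Hk & Hx' & Hz). exists i, x; split; [lia|auto].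
    exists k. split; [lia|split; auto]. intros i0 x0 H1 H2.
    destruct (Nat.eq_dec i0 K). subst. apply NNPP. intros Hc. apply Hn. exists x0; auto.
    apply Hz; lia.
Qed.

Lemma step_down (p : nat -> Prop) k : p 0%nat -> ~ p k -> exists j, (j < k)%nat /\ p j /\ ~ p (S j).
Proof.
  induction k; intros H0 Hk. contradiction.
  destruct (classic (p k)). exists k. split; auto.
  destruct (IHk H0 H) as (j & Hj & P1 & P2). exists j; split; auto.
Qed.

Fixpoint enc (M d : nat) (dig : nat -> nat) : nat :=
  match d with O => O | S d' => (dig O + M * enc M d' (fun i => dig (S i)))%nat end.
Fixpoint digit (M i q : nat) : nat :=
  match i with O => (q mod M)%nat | S i' => digit M i' (q / M)%nat end.

Lemma enc_spec M d : (0 < M)%nat -> forall dig, (forall i, (i < d)%nat -> (dig i < M)%nat) ->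
  (enc M d dig < M ^ d)%nat /\ forall i, (i < d)%nat -> digit M i (enc M d dig) = dig i.
Proof.
  intros HM. induction d; intros dig Hd; simpl.
  - split; [lia| intros; lia].
  - destruct (IHd (fun i => dig (S i))) as [H1 H2]. intros; apply Hd; lia.
    set (e := enc M d (fun i => dig (S i))) in *.
    assert (H0 : (dig 0 < M)%nat) by (apply Hd; lia).
    split. nia.
    intros i Hi. destruct i; simpl.
    + rewrite (Nat.mul_comm M e), Nat.Div0.mod_add. apply Nat.mod_small; auto.
    + rewrite (Nat.mul_comm M e), Nat.div_add by lia. rewrite Nat.div_small by auto. simpl.
      apply H2. lia.
Qed.

Lemma Rsum_count K N0 f V : (forall q, (q < N0)%nat -> f q = V) -> (forall q, (N0 <= q)%nat -> f q = 0) ->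
  0 <= V -> Rsum K f <= INR N0 * V.
Proof.
  intros H1 H2 HV. assert (forall K, Rsum K f <= INR (Nat.min K N0) * V).
  { induction K0. simpl. rewrite Rmult_0_l. lra.
    change (Rsum (S K0) f) with (Rsum K0 f + f K0).
    destruct (Nat.lt_ge_cases K0 N0).
    - rewrite H1 by auto. replace (Nat.min (S K0) N0) with (S (Nat.min K0 N0)) by lia.
      rewrite S_INR. lra.
    - rewrite H2 by auto. replace (Nat.min (S K0) N0) with (Nat.min K0 N0) by lia. lra. }
  eapply Rle_trans; [apply H|]. apply Rmult_le_compat_r; auto. apply le_INR. lia.
Qed.

Lemma norm1_upd d y t x : norm1 (S d) (upd d y t) x = norm1 d y x + Rabs (t - x d).
Proof.
  unfold norm1. simpl. rewrite upd_at. f_equal. apply Rsum_ext. intros i Hi.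
  unfold upd. destruct (Nat.eqb_spec i d); [lia|auto].
Qed.

Lemma norm1_le d x y δ : (forall i, (i < d)%nat -> Rabs (x i - y i) <= δ) -> norm1 d x y <= INR d * δ.
Proof.
  unfold norm1. induction d; intros H. simpl. lra.
  change (Rsum (S d) ?f) with (Rsum d f + f d).
  assert (Rsum d (fun i => Rabs (x i - y i)) <= INR d * δ) by (apply IHd; intros; apply H; lia).
  specialize (H d ltac:(lia)). rewrite S_INR. lra.
Qed.

Lemma arch_nat r : exists M, (0 < M)%nat /\ r < INR M.
Proof.
  destruct (archimed r) as [H1 _]. exists (S (Z.to_nat (up r))). split; [lia|].
  rewrite S_INR. destruct (Z_le_gt_dec 0 (up r)).
  - rewrite INR_IZR_INZ, Z2Nat.id by auto. lra.
  - assert (IZR (up r) <= 0) by (apply IZR_le; lia). pose proof (pos_INR (Z.to_nat (up r))). lra.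
Qed.

Section Strip.
Variables (d : nat) (g g' : (nat -> R) -> R) (B L L' gam tau eta : R).
Hypotheses (HB : 0 < B) (Hgam : 0 < gam) (HL : 0 <= L) (Heta : 0 <= eta) (HL'eta : L' * eta <= gam / 2)
  (Htau1 : - B <= tau) (Htau2 : tau + eta <= B)
  (Hg : forall x y, inbox (S d) B x -> inbox (S d) B y -> Rabs (g x - g y) <= L * norm1 (S d) x y)
  (Hg' : forall x y, inbox (S d) B x -> inbox (S d) B y -> Rabs (g' x - g' y) <= L' * norm1 (S d) x y)
  (Hder : forall x s, derivable_pt_lim (fun t => g (upd d x t)) s (g' (upd d x s))).

Definition Tset (x : nat -> R) := inbox d B x /\ tau <= x d <= tau + eta /\ g x = 0 /\ gam <= Rabs (g' x).

Lemma inbox_S x : inbox d B x -> tau <= x d <= tau + eta -> inbox (S d) B x.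
Proof.
  intros H1 H2 i Hi. destruct (Nat.eq_dec i d). subst. unfold Rabs; destruct Rcase_abs; lra.
  apply H1; lia.
Qed.

Lemma inbox_upd y t : inbox d B y -> tau <= t <= tau + eta -> inbox (S d) B (upd d y t).
Proof.
  intros H1 H2 i Hi. unfold upd. destruct (Nat.eqb_spec i d). unfold Rabs; destruct Rcase_abs; lra.
  apply H1; lia.
Qed.

Lemma close x y δ : Tset x -> Tset y -> (forall i, (i < d)%nat -> Rabs (x i - y i) <= δ) ->
  Rabs (x d - y d) <= 2 * L * (INR d * δ) / gam.
Proof.
  intros (Hx1 & Hx2 & Hx3 & Hx4) (Hy1 & Hy2 & Hy3 & Hy4) Hδ.
  set (z := upd d y (x d)).
  assert (Hz : Rabs (g z) <= L * (INR d * δ)).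
  { replace (g z) with (g z - g x) by (rewrite Hx3; ring).
    eapply Rle_trans; [apply Hg|].
    - apply inbox_upd; auto.
    - apply inbox_S; auto.
    - apply Rmult_le_compat_l; auto. unfold z. rewrite norm1_upd.
      replace (x d - x d) with 0 by ring. rewrite Rabs_R0, Rplus_0_r.
      apply norm1_le. intros i Hi. rewrite Rabs_minus_sym. apply Hδ; auto. }
  assert (Hlow : forall s, tau <= s <= tau + eta -> gam / 2 <= Rabs (g' (upd d y s))).
  { intros s Hs. assert (Hd' := Hg' (upd d y s) y (inbox_upd y s Hy1 Hs) (inbox_S y Hy1 Hy2)).
    rewrite norm1_upd in Hd'. unfold norm1 in Hd'.
    rewrite (Rsum_ext d _ (fun _ => 0)) in Hd'.
    2:{ intros. replace (y i - y i) with 0 by ring. apply Rabs_R0. }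
    assert (Z : forall K, Rsum K (fun _ => 0) = 0) by (clear; induction K; simpl; [lra| rewrite IHK; lra]).
    rewrite Z, Rplus_0_l in Hd'.
    assert (Rabs (s - y d) <= eta) by (unfold Rabs; destruct Rcase_abs; lra).
    assert (L' * Rabs (s - y d) <= gam / 2).
    { destruct (Rle_dec 0 L'). apply Rle_trans with (L' * eta); auto. apply Rmult_le_compat_l; auto.
      pose proof (Rabs_pos (s - y d)). nra. }
    pose proof (Rabs_triang_inv (g' y) (g' (upd d y s))). rewrite Rabs_minus_sym in H1.
    lra. }
  assert (Hgy : g (upd d y (y d)) = 0) by (rewrite upd_same; auto).
  assert (Hgz : g (upd d y (x d)) = g z) by reflexivity.
  assert (Hmvt : forall a b, tau <= a -> b <= tau + eta -> a < b ->
            exists c, g (upd d y b) - g (upd d y a) = g' (upd d y c) * (b - a) /\ a < c < b).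
  { intros a b Ha Hb Hab. apply (MVT_cor2 (fun t => g (upd d y t)) (fun t => g' (upd d y t))); auto. }
  assert (Hk : gam / 2 * Rabs (x d - y d) <= L * (INR d * δ)).
  { destruct (Rtotal_order (x d) (y d)) as [Hlt|[Heq|Hgt]].
    - destruct (Hmvt (x d) (y d)) as (c & Hc1 & Hc2); try lra.
      rewrite Hgy, Hgz in Hc1.
      assert (Hl := Hlow c ltac:(lra)).
      rewrite Rabs_minus_sym. replace (Rabs (y d - x d)) with (y d - x d) by (unfold Rabs; destruct Rcase_abs; lra).
      replace (g z) with (- (g' (upd d y c) * (y d - x d))) in Hz by lra.
      rewrite Rabs_Ropp, Rabs_mult in Hz.
      replace (Rabs (y d - x d)) with (y d - x d) in Hz by (unfold Rabs; destruct Rcase_abs; lra).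
      nra.
    - rewrite Heq. replace (y d - y d) with 0 by ring. rewrite Rabs_R0.
      pose proof (Rabs_pos (g z)). lra.
    - destruct (Hmvt (y d) (x d)) as (c & Hc1 & Hc2); try lra.
      rewrite Hgy, Hgz in Hc1.
      assert (Hl := Hlow c ltac:(lra)).
      replace (Rabs (x d - y d)) with (x d - y d) by (unfold Rabs; destruct Rcase_abs; lra).
      replace (g z) with (g' (upd d y c) * (x d - y d)) in Hz by lra.
      rewrite Rabs_mult in Hz.
      replace (Rabs (x d - y d)) with (x d - y d) in Hz by (unfold Rabs; destruct Rcase_abs; lra).
      nra. }
  apply Rmult_le_reg_l with (gam / 2). lra.
  replace (gam / 2 * (2 * L * (INR d * δ) / gam)) with (L * (INR d * δ)) by (field; lra). exact Hk.
Qed.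

Lemma strip_null : lebesgue_null (S d) Tset.
Proof.
  intros eps He.
  set (C0 := (2 * B) ^ d * 8 * L * INR d * B / (gam * eps)).
  destruct (arch_nat C0) as (M & HM & HC0).
  set (δ := 2 * B / INR M).
  assert (HMpos : 0 < INR M) by (apply lt_0_INR; lia).
  assert (Hδ : 0 < δ) by (unfold δ; apply Rdiv_lt_0_compat; lra).
  set (r := 2 * L * (INR d * δ) / gam).
  assert (Hr : 0 <= r) by (unfold r; apply Rmult_le_pos; [apply Rmult_le_pos; [lra| apply Rmult_le_pos; [apply pos_INR| lra]]| apply Rlt_le, Rinv_0_lt_compat; lra]).
  set (incell := fun q (x : nat -> R) => forall i, (i < d)%nat ->
         - B + INR (digit M i q) * δ <= x i <= - B + (INR (digit M i q) + 1) * δ).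
  assert (Hch : forall q, exists y, (exists x, incell q x /\ Tset x) -> incell q y /\ Tset y).
  { intros q. destruct (classic (exists x, incell q x /\ Tset x)) as [[x Hx]|Hn].
    - exists x; auto.
    - exists (fun _ => 0). intros H; contradiction. }
  destruct (functional_choice _ Hch) as [Y HY].
  exists (fun q i => if Nat.ltb q (M ^ d) then (if Nat.ltb i d then - B + INR (digit M i q) * δ else Y q d - r) else 0),
         (fun q i => if Nat.ltb q (M ^ d) then (if Nat.ltb i d then - B + (INR (digit M i q) + 1) * δ else Y q d + r) else 0).
  split; [|split].
  - intros q i. destruct (Nat.ltb q (M ^ d)); [|lra]. destruct (Nat.ltb i d); lra.
  - intros x Hx.
    set (dig := fun i => Nat.min (M - 1) (Z.to_nat (Int_part ((x i + B) / δ)))).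
    assert (Hdig : forall i, (i < d)%nat -> (dig i < M)%nat) by (intros; unfold dig; lia).
    destruct (enc_spec M d HM dig Hdig) as [Hq1 Hq2].
    set (q := enc M d dig) in *.
    assert (Hcell : incell q x).
    { intros i Hi. rewrite Hq2 by auto.
      destruct Hx as (Hx1 & _). assert (Hxi := Hx1 i Hi). apply Rabs_le_b in Hxi.
      set (u := (x i + B) / δ).
      assert (Hu0 : 0 <= u) by (unfold u; apply Rmult_le_pos; [lra| apply Rlt_le, Rinv_0_lt_compat; lra]).
      assert (HuM : u <= INR M).
      { unfold u, δ. replace ((x i + B) / (2 * B / INR M)) with (INR M * ((x i + B) / (2 * B))) by (field; lra).
        rewrite <- (Rmult_1_r (INR M)) at 2. apply Rmult_le_compat_l; [lra|].
        apply Rmult_le_reg_r with (2*B); [lra|]. unfold Rdiv. rewrite Rmult_assoc, Rinv_l, Rmult_1_r by lra. lra. }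
      destruct (base_Int_part u) as [Hk1 Hk2].
      assert (Hk0 : (0 <= Int_part u)%Z) by (assert (-1 < Int_part u)%Z by (apply lt_IZR; lra); lia).
      assert (Hb : INR (dig i) <= u <= INR (dig i) + 1).
      { unfold dig. fold u. destruct (Nat.le_gt_cases (Z.to_nat (Int_part u)) (M - 1)).
        - rewrite Nat.min_r by auto. rewrite INR_IZR_INZ, Z2Nat.id by auto. fold u. lra.
        - rewrite Nat.min_l by lia. fold u. rewrite minus_INR by lia. change (INR 1) with 1.
          split; [|lra].
          apply Rle_trans with (IZR (Int_part u)); auto.
          rewrite <- (Z2Nat.id (Int_part u)) by auto. rewrite <- INR_IZR_INZ. apply le_INR in H.
          rewrite S_INR, minus_INR in H by lia. change (INR 1) with 1 in H. lra. }
      unfold u in Hb. destruct Hb as [Hb1 Hb2].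
      split.
      - apply Rmult_le_compat_r with (r := δ) in Hb1; [|lra]. unfold Rdiv in Hb1.
        rewrite Rmult_assoc, Rinv_l, Rmult_1_r in Hb1 by lra. lra.
      - apply Rmult_le_compat_r with (r := δ) in Hb2; [|lra]. unfold Rdiv in Hb2.
        rewrite Rmult_assoc, Rinv_l, Rmult_1_r in Hb2 by lra. lra. }
    destruct (HY q (ex_intro _ x (conj Hcell Hx))) as [HYc HYT].
    exists q. intros i Hi.
    destruct (Nat.ltb_spec q (M ^ d)); [|lia].
    destruct (Nat.ltb_spec i d).
    + apply Hcell; auto.
    + assert (i = d) by lia. subst i.
      assert (Hcl := close x (Y q) δ Hx HYT).
      assert (Rabs (x d - Y q d) <= r).
      { apply Hcl. intros i Hi'. specialize (Hcell i Hi'). specialize (HYc i Hi').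
        unfold Rabs; destruct Rcase_abs; lra. }
      apply Rabs_le_b in H1. fold r. lra.
  - intros K.
    eapply Rle_trans.
    + apply Rsum_count with (N0 := (M ^ d)%nat) (V := δ ^ d * (2 * r)).
      * intros q Hq. simpl. destruct (Nat.ltb_spec q (M ^ d)); [|lia].
        rewrite (Rprod_ext d _ (fun _ => δ)).
        -- rewrite Rprod_const. destruct (Nat.ltb_spec d d); [lia|]. ring.
        -- intros i Hi. destruct (Nat.ltb_spec i d); [ring|lia].
      * intros q Hq. simpl. destruct (Nat.ltb_spec q (M ^ d)); [lia|]. ring.
      * apply Rmult_le_pos; [apply pow_le; lra| lra].
    + rewrite pow_INR.
      replace (INR M ^ d * (δ ^ d * (2 * r))) with ((INR M * δ) ^ d * (2 * r)) by (rewrite Rpow_mult_distr; ring).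
      replace (INR M * δ) with (2 * B) by (unfold δ; field; lra).
      unfold r, δ.
      replace ((2 * B) ^ d * (2 * (2 * L * (INR d * (2 * B / INR M)) / gam)))
        with (((2 * B) ^ d * 8 * L * INR d * B / gam) / INR M) by (field; lra).
      assert (HC : C0 * eps = (2 * B) ^ d * 8 * L * INR d * B / gam) by (unfold C0; field; lra).
      rewrite <- HC. apply Rmult_le_reg_r with (INR M); auto.
      unfold Rdiv. rewrite Rmult_assoc, Rinv_l, Rmult_1_r by lra. nra.
Qed.

End Strip.

Lemma Rsum_term K f i : (forall j, (j < K)%nat -> 0 <= f j) -> (i < K)%nat -> f i <= Rsum K f.
Proof.
  induction K; intros H Hi; [lia|]. change (Rsum (S K) f) with (Rsum K f + f K).
  assert (0 <= Rsum K f) by (apply Rsum_nonneg; intros; apply H; lia).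
  destruct (Nat.eq_dec i K). subst. lra.
  assert (f i <= Rsum K f) by (apply IHK; [intros; apply H; lia| lia]).
  specialize (H K ltac:(lia)). lra.
Qed.

Lemma null_or d (E F : (nat -> R) -> Prop) : lebesgue_null d E -> lebesgue_null d F ->
  lebesgue_null d (fun x => E x \/ F x).
Proof.
  intros HE HF. apply null_mono with (F := fun x => exists k : nat, (if Nat.eqb k 0 then E else F) x).
  - intros x [H|H]. exists 0%nat; auto. exists 1%nat; auto.
  - apply null_union. intros k. destruct (Nat.eqb k 0); auto.
Qed.

Lemma stratum d g g' : PolyR (S d) g -> PolyR (S d) g' ->
  (forall x s, derivable_pt_lim (fun t => g (upd d x t)) s (g' (upd d x s))) ->
  lebesgue_null (S d) (fun x => g x = 0 /\ g' x <> 0).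
Proof.
  intros Pg Pg' Hder.
  apply null_mono with (F := fun x => exists l : nat,
    inbox (S d) (INR l) x /\ g x = 0 /\ / (INR l + 1) <= Rabs (g' x)).
  { intros x [H1 H2].
    assert (Hpos : 0 < Rabs (g' x)) by (apply Rabs_pos_lt; auto).
    destruct (arch_nat (Rsum (S d) (fun i => Rabs (x i)) + / Rabs (g' x))) as (l & Hl0 & Hl).
    assert (Hs : 0 <= Rsum (S d) (fun i => Rabs (x i))) by (apply Rsum_nonneg; intros; apply Rabs_pos).
    assert (Hi : 0 < / Rabs (g' x)) by (apply Rinv_0_lt_compat; auto).
    exists l. split; [|split; auto].
    - intros i Hi'. pose proof (Rsum_term (S d) (fun i => Rabs (x i)) i ltac:(intros; apply Rabs_pos) Hi'). lra.
    - assert (HH : / Rabs (g' x) < INR l + 1) by lra.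
      apply Rle_trans with (/ / Rabs (g' x)).
      + apply Rlt_le, Rinv_lt_contravar; [apply Rmult_lt_0_compat; lra| lra].
      + rewrite Rinv_inv. lra. }
  apply null_union. intros l.
  set (B := INR l + 1). set (gam := / (INR l + 1)).
  assert (HB : 0 < B) by (unfold B; pose proof (pos_INR l); lra).
  assert (Hgam : 0 < gam) by (unfold gam; apply Rinv_0_lt_compat; pose proof (pos_INR l); lra).
  assert (Hgam1 : gam <= 1).
  { unfold gam. rewrite <- Rinv_1. apply Rinv_le_contravar; [lra| pose proof (pos_INR l); lra]. }
  destruct (Poly_lip _ _ Pg B (Rlt_le _ _ HB)) as (L & Mg & HL & _ & _ & Hlg).
  destruct (Poly_lip _ _ Pg' B (Rlt_le _ _ HB)) as (L' & Mg' & HL' & _ & _ & Hlg').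
  set (eta := gam / (2 * L' + 1)).
  assert (Heta : 0 < eta) by (unfold eta; apply Rdiv_lt_0_compat; lra).
  assert (Heta1 : eta <= 1).
  { unfold eta. apply Rle_trans with gam; auto. unfold Rdiv. rewrite <- (Rmult_1_r gam) at 2.
    apply Rmult_le_compat_l; [lra|]. rewrite <- Rinv_1. apply Rinv_le_contravar; lra. }
  assert (HLe : L' * eta <= gam / 2).
  { unfold eta. replace (L' * (gam / (2 * L' + 1))) with (gam * (L' / (2 * L' + 1))) by (field; lra).
    replace (gam / 2) with (gam * / 2) by reflexivity. apply Rmult_le_compat_l; [lra|].
    apply Rmult_le_reg_r with (2 * L' + 1); [lra|]. unfold Rdiv. rewrite Rmult_assoc, Rinv_l by lra.
    lra. }
  apply null_mono with (F := fun x => exists k : nat,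
     (- INR l + INR k * eta + eta <= B) /\ Tset d g g' B gam (- INR l + INR k * eta) eta x).
  { intros x (Hx1 & Hx2 & Hx3).
    assert (Hxd := Hx1 d ltac:(lia)). apply Rabs_le_b in Hxd.
    set (u := (x d + INR l) / eta).
    assert (Hu0 : 0 <= u) by (unfold u; apply Rmult_le_pos; [lra| apply Rlt_le, Rinv_0_lt_compat; lra]).
    destruct (base_Int_part u) as [Hk1 Hk2].
    assert (Hk0 : (0 <= Int_part u)%Z) by (assert (-1 < Int_part u)%Z by (apply lt_IZR; lra); lia).
    set (k := Z.to_nat (Int_part u)).
    assert (Hk : INR k <= u < INR k + 1).
    { unfold k. rewrite INR_IZR_INZ, Z2Nat.id by auto. lra. }
    assert (Hk' : INR k * eta <= x d + INR l < INR k * eta + eta).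
    { destruct Hk as [K1 K2]. unfold u in K1, K2.
      split.
      - apply Rmult_le_compat_r with (r := eta) in K1; [|lra]. unfold Rdiv in K1.
        rewrite Rmult_assoc, Rinv_l, Rmult_1_r in K1 by lra. lra.
      - apply Rmult_lt_compat_r with (r := eta) in K2; [|lra]. unfold Rdiv in K2.
        rewrite Rmult_assoc, Rinv_l, Rmult_1_r in K2 by lra. lra. }
    exists k. split.
    - unfold B. lra.
    - unfold Tset. split; [|split; [lra|split; auto]].
      + intros i Hi. apply Rle_trans with (INR l). apply Hx1; lia. unfold B; lra. }
  apply null_union. intros k.
  destruct (Rle_dec (- INR l + INR k * eta + eta) B) as [Hc|Hc].
  - apply null_mono with (F := Tset d g g' B gam (- INR l + INR k * eta) eta).
    { intros x [_ H]; auto. }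
    apply (strip_null d g g' B L L'); auto; try lra. all: try (intros; apply Hlg; auto). all: try (intros; apply Hlg'; auto).
    pose proof (pos_INR k). unfold B. nra.
  - apply null_empty; [lia|]. intros x [H _]. contradiction.
Qed.

Lemma poly_null_step d :
  (forall c, PolyR d c -> (exists x, c x <> 0) -> lebesgue_null (S d) (fun x => c x = 0)) ->
  forall P, PolyR (S d) P -> (exists x, P x <> 0) -> lebesgue_null (S d) (fun x => P x = 0).
Proof.
  intros IH P HP [x0 Hx0].
  destruct (Dec_coef _ _ (Poly_Dec _ _ HP)) as (K & c & Pc & Sc & Ec).
  assert (Hex : exists i x, (i < K)%nat /\ c i x <> 0).
  { apply NNPP; intros Hn; apply Hx0; rewrite Ec; unfold ev.
    rewrite (Rsum_ext K _ (fun _ => 0)).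
    - clear; induction K; simpl; [lra| rewrite IHK; lra].
    - intros i Hi; destruct (Req_dec (c i x0) 0) as [E|E]; [rewrite E; ring| exfalso; apply Hn; exists i, x0; auto]. }
  destruct (top_exists K c Hex) as (k & Hk & [x1 Hx1] & Hz).
  assert (Hz' : forall i y, (k < i)%nat -> c i y = 0).
  { intros i y Hi; destruct (Nat.lt_ge_cases i K); [apply Hz; auto| apply Sc; auto]. }
  apply null_mono with (F := fun x => c k x = 0 \/ exists j : nat,
        ev d K (dcn j c) x = 0 /\ ev d K (dcn (S j) c) x <> 0).
  { intros x Hx; destruct (Req_dec (c k x) 0) as [E|E]; [left; auto| right].
    destruct (step_down (fun j => ev d K (dcn j c) x = 0) k) as (j & _ & H1 & H2).
    - rewrite ev_dcn0, <- Ec; auto.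
    - rewrite ev_dcn_top by auto; apply Rmult_integral_contrapositive; split; auto.
      apply Rgt_not_eq, lt_0_INR, lt_O_fact.
    - exists j; auto. }
  apply null_or.
  - apply IH; auto. exists x1; auto.
  - apply null_union; intros j; apply stratum.
    + apply Poly_ev, dcn_Poly; auto.
    + apply Poly_ev, dcn_Poly; auto.
    + intros; apply ev_dcn_deriv; auto.
Qed.

Theorem poly_null d : forall P, PolyR (S d) P -> (exists x, P x <> 0) -> lebesgue_null (S d) (fun x => P x = 0).
Proof.
  induction d as [|d IH]; apply poly_null_step.
  - intros c Hc [x1 Hx1]. apply null_empty; [lia|]. intros x Hx. apply Hx1.
    rewrite (Poly_dep 0 c Hc x1 x); auto. intros; lia.
  - intros c Hc Hx. apply null_cyl. apply IH; auto.
Qed.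

Definition CPoly d (f : (nat -> R) -> C) := PolyR d (fun x => fst (f x)) /\ PolyR d (fun x => snd (f x)).

Lemma CPoly_const d z : CPoly d (fun _ => z).
Proof. split; constructor. Qed.

Lemma CPoly_add d f g : CPoly d f -> CPoly d g -> CPoly d (fun x => Cadd (f x) (g x)).
Proof. intros [F1 F2] [G1 G2]; split; simpl; constructor; auto. Qed.

Lemma CPoly_mul d f g : CPoly d f -> CPoly d g -> CPoly d (fun x => Cmul (f x) (g x)).
Proof.
  intros [F1 F2] [G1 G2]; split; simpl.
  - apply Poly_sub; constructor; auto.
  - constructor; constructor; auto.
Qed.

Lemma CPoly_opp d f : CPoly d f -> CPoly d (fun x => Copp (f x)).
Proof. intros [F1 F2]; split; simpl; apply Poly_opp; auto. Qed.

Lemma CPoly_conj d f : CPoly d f -> CPoly d (fun x => Cconj (f x)).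
Proof. intros [F1 F2]; split; simpl; auto. apply Poly_opp; auto. Qed.

Lemma CPoly_sum d K F : (forall i, (i < K)%nat -> CPoly d (F i)) -> CPoly d (fun x => Csum K (fun i => F i x)).
Proof.
  induction K; intros H; simpl. apply CPoly_const.
  apply CPoly_add. apply IHK; intros; apply H; lia. apply H; lia.
Qed.

Lemma CPoly_X n m N i j : (i < m)%nat -> (j < N)%nat ->
  CPoly (2 * (m * N) + 2 * (n * m)) (fun x => decX m x i j).
Proof.
  intros Hi Hj. unfold decX. split; simpl; constructor; nia.
Qed.

Lemma CPoly_A n m N k i : (k < n)%nat -> (i < m)%nat ->
  CPoly (2 * (m * N) + 2 * (n * m)) (fun x => decA n m N x k i).
Proof.
  intros Hk Hi. unfold decA. split; simpl; constructor; nia.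
Qed.

Lemma CPoly_bigM n m N r c : (0 < m)%nat -> (r < 1 + n * (N - 1))%nat -> (c < m * N)%nat ->
  CPoly (2 * (m * N) + 2 * (n * m)) (fun x => bigM n m N (decX m x) (decA n m N x) r c).
Proof.
  intros Hm Hr Hc. unfold bigM.
  assert (Hcm : (c mod m < m)%nat) by (apply Nat.mod_upper_bound; lia).
  assert (HcN : (c / m < N)%nat) by (apply Nat.Div0.div_lt_upper_bound; lia).
  destruct (Nat.eqb_spec r 0).
  - apply CPoly_conj. apply CPoly_X; auto.
  - assert (HN : (1 < N)%nat) by (destruct N as [|[|N']]; nia).
    assert (Hk : ((r - 1) / (N - 1) < n)%nat) by (apply Nat.Div0.div_lt_upper_bound; nia).
    assert (Hr' : ((r - 1) mod (N - 1) < N - 1)%nat) by (apply Nat.mod_upper_bound; lia).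
    unfold Dmat. apply CPoly_mul; [| apply CPoly_A; auto].
    unfold Bmat.
    destruct (Nat.eqb (c / m) 0); [apply CPoly_opp|]; [| destruct (Nat.eqb (c / m) (S ((r - 1) mod (N - 1)))); [|apply CPoly_const]];
    unfold rowcol; apply CPoly_sum; intros i Hi; apply CPoly_mul; try apply CPoly_A; try apply CPoly_X; auto; lia.
Qed.

Definition dl (i p : nat) : R := if Nat.eqb i p then 1 else 0.
Definition ind (b : bool) : R := if b then 1 else 0.

Lemma Rsum_dl m p f : (p < m)%nat -> Rsum m (fun i => dl i p * f i) = f p.
Proof.
  induction m; intros H; [lia|]. change (Rsum (S m) ?g) with (Rsum m g + g m). cbv beta.
  destruct (Nat.eq_dec p m).
  - subst. rewrite (Rsum_ext m _ (fun _ => 0)).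
    + assert (Z : forall K, Rsum K (fun _ => 0) = 0) by (clear; induction K; simpl; [lra| rewrite IHK; lra]).
      rewrite Z. unfold dl. rewrite Nat.eqb_refl. ring.
    + intros i Hi. unfold dl. destruct (Nat.eqb_spec i m); [lia|ring].
  - rewrite IHm by lia. unfold dl. destruct (Nat.eqb_spec m p); [lia|ring].
Qed.

Lemma Rsum_zero K f : (forall i, (i < K)%nat -> f i = 0) -> Rsum K f = 0.
Proof.
  intros H. rewrite (Rsum_ext K f (fun _ => 0)) by auto. clear. induction K; simpl; [lra| rewrite IHK; lra].
Qed.

Lemma Rsum_two N p a b F : (0 < p < N)%nat ->
  Rsum N (fun j => (if Nat.eqb j 0 then a else if Nat.eqb j p then b else 0) * F j) = a * F 0%nat + b * F p.
Proof.
  intros Hp.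
  rewrite (Rsum_ext N _ (fun j => a * (dl j 0 * F j) + b * (dl j p * F j))).
  - rewrite Rsum_plus, !Rsum_scal, !Rsum_dl by lia. ring.
  - intros j Hj. unfold dl. destruct (Nat.eqb_spec j 0), (Nat.eqb_spec j p); subst; try lia; ring.
Qed.

Lemma Rsum_mN m N h : Rsum (m * N) h = Rsum N (fun j => Rsum m (fun i => h (i + m * j)%nat)).
Proof.
  rewrite Nat.mul_comm, Rsum_double. apply Rsum_ext. intros j _. apply Rsum_ext. intros i _.
  f_equal. lia.
Qed.

Lemma sub_helper a r : (1 + a + r - 1 = r + a)%nat.
Proof. lia. Qed.

Lemma Rsum_const K c : Rsum K (fun _ => c) = INR K * c.
Proof. induction K. simpl. ring. change (Rsum (S K) ?f) with (Rsum K f + f K). rewrite IHK, S_INR. ring. Qed.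

Section Witness.
Variables (n m N : nat).

Definition Aw (k i : nat) : R :=
  if Nat.eqb k 0 then dl i 0
  else if Nat.ltb k N then dl i 0 + dl i k
  else if Nat.eqb k N then dl i 0 + 2 * ind (Nat.ltb 0 i && Nat.ltb i N)
  else if Nat.leb k m then dl i 0 + dl i (1 + (k - 1 - N) mod (N - 1)) + dl i (k - 1)
  else dl i 0 + ind (Nat.leb N i && Nat.eqb ((i - N) / (N - 1)) (k - m - 1)).

Definition Xw (i j : nat) : R := dl i j.

Definition bmR (row c : nat) : R :=
  if Nat.eqb row 0 then Xw (c mod m) (c / m)
  else (if Nat.eqb (c / m) 0 then - Aw ((row - 1) / (N - 1)) (S ((row - 1) mod (N - 1)))
        else if Nat.eqb (c / m) (S ((row - 1) mod (N - 1))) then Aw ((row - 1) / (N - 1)) 0 else 0)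
       * Aw ((row - 1) / (N - 1)) (c mod m).

Hypotheses (Hm : (0 < m)%nat) (HN2 : (2 <= N)%nat) (HNm : (N <= m)%nat) (Hmn : (m < n)%nat)
  (Hcnt : (m - N <= (N - 1) * (n - m - 1))%nat).

Variable u : nat -> R.
Hypothesis Hu : forall row, (row < 1 + n * (N - 1))%nat -> Rsum (m * N) (fun c => bmR row c * u c) = 0.

Definition U (j i : nat) := u (i + m * j)%nat.
Definition Sk (k j : nat) := Rsum m (fun i => Aw k i * U j i).

Lemma eq_row k r : (k < n)%nat -> (r < N - 1)%nat ->
  - Aw k (Datatypes.S r) * Sk k 0 + Aw k 0 * Sk k (Datatypes.S r) = 0.
Proof.
  intros Hk Hr. set (row := (1 + k * (N - 1) + r)%nat).
  assert (Hrow : (row < 1 + n * (N - 1))%nat).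
  { assert (HH : ((k + 1) * (N - 1) <= n * (N - 1))%nat) by (apply Nat.mul_le_mono_r; lia).
    rewrite Nat.mul_add_distr_r, Nat.mul_1_l in HH. unfold row. lia. }
  specialize (Hu row Hrow). rewrite Rsum_mN in Hu.
  assert (E1 : ((row - 1) / (N - 1) = k)%nat).
  { unfold row. rewrite sub_helper.
    rewrite Nat.div_add by lia. rewrite Nat.div_small by lia. lia. }
  assert (E2 : ((row - 1) mod (N - 1) = r)%nat).
  { unfold row. rewrite sub_helper.
    rewrite Nat.Div0.mod_add. apply Nat.mod_small. lia. }
  rewrite <- Hu. unfold Sk.
  rewrite (Rsum_ext N _ (fun j => (if Nat.eqb j 0 then - Aw k (Datatypes.S r) else
        if Nat.eqb j (Datatypes.S r) then Aw k 0 else 0) * Rsum m (fun i => Aw k i * U j i))).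
  - rewrite Rsum_two by lia. ring.
  - intros j Hj. rewrite <- Rsum_scal. apply Rsum_ext. intros i Hi.
    unfold bmR. destruct (Nat.eqb_spec row 0); [unfold row in e; simpl in e; discriminate|].
    rewrite E1, E2.
    replace ((i + m * j) / m)%nat with j by (rewrite Nat.mul_comm, Nat.div_add by lia; rewrite Nat.div_small by lia; lia).
    replace ((i + m * j) mod m)%nat with i by (rewrite Nat.mul_comm, Nat.Div0.mod_add, Nat.mod_small by lia; lia).
    unfold U. ring.
Qed.

Lemma eq_row0 : Rsum N (fun j => U j j) = 0.
Proof.
  specialize (Hu 0%nat (Nat.lt_0_succ _)). rewrite Rsum_mN in Hu. rewrite <- Hu.
  apply Rsum_ext. intros j Hj.
  rewrite (Rsum_ext m _ (fun i => dl i j * U j i)).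
  - rewrite Rsum_dl by lia. reflexivity.
  - intros i Hi. unfold bmR. simpl.
    replace ((i + m * j) / m)%nat with j by (rewrite Nat.mul_comm, Nat.div_add by lia; rewrite Nat.div_small by lia; lia).
    replace ((i + m * j) mod m)%nat with i by (rewrite Nat.mul_comm, Nat.Div0.mod_add, Nat.mod_small by lia; lia).
    reflexivity.
Qed.

Lemma dl_ne i p : i <> p -> dl i p = 0.
Proof. intros H. unfold dl. destruct (Nat.eqb_spec i p); [lia|auto]. Qed.
Lemma dl_eq i : dl i i = 1.
Proof. unfold dl. rewrite Nat.eqb_refl. auto. Qed.

Lemma step1 j : (1 <= j < N)%nat -> U j 0 = 0.
Proof.
  intros Hj. pose proof (eq_row 0 (j - 1) ltac:(lia) ltac:(lia)) as E.
  replace (Datatypes.S (j - 1)) with j in E by lia.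
  unfold Sk, Aw in E. simpl in E. rewrite !Rsum_dl in E by lia.
  rewrite dl_ne in E by lia. rewrite dl_eq in E. lra.
Qed.

Lemma step2 j k : (1 <= j < N)%nat -> (1 <= k < N)%nat -> U j k = dl j k * (U 0 0 + U 0 k).
Proof.
  intros Hj Hk. pose proof (eq_row k (j - 1) ltac:(lia) ltac:(lia)) as E.
  replace (Datatypes.S (j - 1)) with j in E by lia.
  assert (HA : forall i, Aw k i = dl i 0 + dl i k).
  { intros i. unfold Aw. destruct (Nat.eqb_spec k 0); [lia|]. destruct (Nat.ltb_spec k N); [auto|lia]. }
  assert (HS : forall j', Sk k j' = U j' 0 + U j' k).
  { intros j'. unfold Sk. rewrite (Rsum_ext m _ (fun i => dl i 0 * U j' i + dl i k * U j' i)).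
    rewrite Rsum_plus, !Rsum_dl by lia. ring. intros i _. rewrite HA. ring. }
  rewrite !HS, !HA in E.
  rewrite (step1 j) in E by lia. rewrite (dl_ne j 0), (dl_ne 0 k), dl_eq in E by lia. lra.
Qed.

Lemma Rsum_cnt K : Rsum K (fun i => ind (Nat.ltb 0 i && Nat.ltb i N)) = INR (Nat.min K N - 1).
Proof.
  induction K. reflexivity.
  change (Rsum (Datatypes.S K) ?f) with (Rsum K f + f K). cbv beta. rewrite IHK.
  unfold ind. destruct (Nat.ltb_spec 0 K), (Nat.ltb_spec K N); cbn [andb].
  - replace (Nat.min (Datatypes.S K) N - 1)%nat with (Datatypes.S (Nat.min K N - 1)) by lia.
    rewrite S_INR. ring.
  - replace (Nat.min (Datatypes.S K) N - 1)%nat with (Nat.min K N - 1)%nat by lia. ring.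
  - replace (Nat.min (Datatypes.S K) N - 1)%nat with (Nat.min K N - 1)%nat by lia. ring.
  - replace (Nat.min (Datatypes.S K) N - 1)%nat with (Nat.min K N - 1)%nat by lia. ring.
Qed.

Lemma step3 j : (1 <= j < N)%nat -> U 0 j = 0.
Proof.
  assert (HA : forall i, Aw N i = dl i 0 + 2 * ind (Nat.ltb 0 i && Nat.ltb i N)).
  { intros i. unfold Aw. destruct (Nat.eqb_spec N 0); [lia|]. destruct (Nat.ltb_spec N N); [lia|].
    rewrite Nat.eqb_refl. reflexivity. }
  set (T := fun j' => Rsum m (fun i => ind (Nat.ltb 0 i && Nat.ltb i N) * U j' i)).
  assert (HS : forall j', Sk N j' = U j' 0 + 2 * T j').
  { intros j'. unfold Sk, T. rewrite (Rsum_ext m _ (fun i => dl i 0 * U j' i + 2 * (ind (Nat.ltb 0 i && Nat.ltb i N) * U j' i))).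
    rewrite Rsum_plus, Rsum_scal, Rsum_dl by lia. ring. intros i _. rewrite HA. ring. }
  assert (HT : forall j', (1 <= j' < N)%nat -> T j' = U 0 0 + U 0 j').
  { intros j' Hj'. unfold T. rewrite (Rsum_ext m _ (fun i => dl i j' * (U 0 0 + U 0 j'))).
    apply Rsum_dl; lia.
    intros i Hi. unfold ind. destruct (Nat.ltb_spec 0 i), (Nat.ltb_spec i N); simpl.
    - rewrite step2 by lia. unfold dl. destruct (Nat.eqb_spec j' i), (Nat.eqb_spec i j'); subst; try lia; ring.
    - rewrite dl_ne by lia. ring.
    - rewrite dl_ne by lia. ring.
    - rewrite dl_ne by lia. ring. }
  assert (Hj0 : forall j', (1 <= j' < N)%nat -> U 0 j' = 2 * T 0%nat).
  { intros j' Hj'. pose proof (eq_row N (j' - 1) ltac:(lia) ltac:(lia)) as E.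
    replace (Datatypes.S (j' - 1)) with j' in E by lia.
    rewrite !HS, !HA, (HT j'), (step1 j') in E by lia.
    rewrite (dl_ne j' 0), dl_eq in E by lia. unfold ind in E. simpl in E.
    destruct (Nat.ltb_spec 0 j'), (Nat.ltb_spec j' N); try lia. simpl in E. lra. }
  assert (HT0 : T 0%nat = 2 * T 0%nat * INR (N - 1)).
  { unfold T at 1. rewrite (Rsum_ext m _ (fun i => 2 * T 0%nat * ind (Nat.ltb 0 i && Nat.ltb i N))).
    rewrite Rsum_scal, Rsum_cnt. f_equal. f_equal. lia.
    intros i Hi. unfold ind. destruct (Nat.ltb_spec 0 i), (Nat.ltb_spec i N); simpl; try ring.
    rewrite Hj0 by lia. ring. }
  assert (HN1 : 1 <= INR (N - 1)) by (apply (le_INR 1); lia).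
  assert (T 0%nat = 0) by nra.
  intros Hj. rewrite Hj0 by auto. lra.
Qed.

Lemma head j k : (1 <= j < N)%nat -> (1 <= k < N)%nat -> U j k = dl j k * U 0 0.
Proof. intros. rewrite step2, (step3 k) by auto. ring. Qed.

Lemma dl_sym i j : dl i j = dl j i.
Proof. unfold dl. destruct (Nat.eqb_spec i j), (Nat.eqb_spec j i); subst; auto; lia. Qed.

Lemma step4 t j : (N <= t < m)%nat -> (1 <= j < N)%nat ->
  U j t = dl j (1 + (t - N) mod (N - 1)) * U 0 t.
Proof.
  intros Ht Hj. set (p := (1 + (t - N) mod (N - 1))%nat).
  assert (Hp : (1 <= p < N)%nat) by (unfold p; pose proof (Nat.mod_upper_bound (t - N) (N - 1)); lia).
  assert (HA : forall i, Aw (Datatypes.S t) i = dl i 0 + dl i p + dl i t).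
  { intros i. unfold Aw. destruct (Nat.eqb_spec (Datatypes.S t) 0); [lia|].
    destruct (Nat.ltb_spec (Datatypes.S t) N); [lia|]. destruct (Nat.eqb_spec (Datatypes.S t) N); [lia|].
    destruct (Nat.leb_spec (Datatypes.S t) m); [|lia].
    replace (Datatypes.S t - 1 - N)%nat with (t - N)%nat by lia. replace (Datatypes.S t - 1)%nat with t by lia.
    reflexivity. }
  assert (HS : forall j', Sk (Datatypes.S t) j' = U j' 0 + U j' p + U j' t).
  { intros j'. unfold Sk. rewrite (Rsum_ext m _ (fun i => dl i 0 * U j' i + dl i p * U j' i + dl i t * U j' i)).
    rewrite !Rsum_plus, !Rsum_dl by lia. ring. intros i _. rewrite HA. ring. }
  pose proof (eq_row (Datatypes.S t) (j - 1) ltac:(lia) ltac:(lia)) as E.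
  replace (Datatypes.S (j - 1)) with j in E by lia.
  rewrite !HS, !HA in E. rewrite (step1 j), (head j p), (step3 p) in E by lia.
  rewrite (dl_ne j 0), (dl_ne j t), (dl_ne 0 p), (dl_ne 0 t), dl_eq in E by lia.
  fold p. lra.
Qed.

Lemma step5 t : (N <= t < m)%nat -> U 0 t = 0.
Proof.
  intros Ht. set (b := ((t - N) / (N - 1))%nat). set (p := (1 + (t - N) mod (N - 1))%nat).
  assert (Hp : (1 <= p < N)%nat) by (unfold p; pose proof (Nat.mod_upper_bound (t - N) (N - 1)); lia).
  assert (Hb : (b < n - m - 1)%nat).
  { unfold b. apply Nat.Div0.div_lt_upper_bound. lia. }
  set (k := (m + 1 + b)%nat).
  set (blk := fun i => andb (Nat.leb N i) (Nat.eqb ((i - N) / (N - 1)) b)).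
  assert (HA : forall i, Aw k i = dl i 0 + ind (blk i)).
  { intros i. unfold Aw. destruct (Nat.eqb_spec k 0); [unfold k in *; lia|].
    destruct (Nat.ltb_spec k N); [unfold k in *; lia|]. destruct (Nat.eqb_spec k N); [unfold k in *; lia|].
    destruct (Nat.leb_spec k m); [unfold k in *; lia|].
    unfold blk. replace (k - m - 1)%nat with b by (unfold k; lia). reflexivity. }
  assert (Hblk : forall i, (i < N)%nat -> blk i = false).
  { intros i Hi. unfold blk. destruct (Nat.leb_spec N i); [lia|reflexivity]. }
  pose proof (eq_row k (p - 1) ltac:(unfold k; lia) ltac:(lia)) as E.
  replace (Datatypes.S (p - 1)) with p in E by lia.
  rewrite !HA, (Hblk p), (Hblk 0%nat) in E by lia. rewrite (dl_ne p 0), dl_eq in E by lia.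
  unfold ind in E.
  assert (HS : Sk k p = U 0 t).
  { unfold Sk. rewrite (Rsum_ext m _ (fun i => dl i t * U 0 t)).
    exact (Rsum_dl m t (fun _ => U 0 t) ltac:(lia)).
    intros i Hi. rewrite HA.
    destruct (Nat.lt_ge_cases i N).
    - rewrite (Hblk i H), (dl_ne i t) by lia. unfold ind.
      destruct (Nat.eq_dec i 0). subst. rewrite (step1 p) by lia. ring.
      rewrite dl_ne by lia. ring.
    - rewrite (dl_ne i 0) by lia. rewrite (step4 i p) by lia. unfold ind, blk.
      destruct (Nat.leb_spec N i); [|lia]. simpl.
      destruct (Nat.eq_dec i t).
      + subst i. fold b. rewrite Nat.eqb_refl. fold p. rewrite !dl_eq. ring.
      + rewrite (dl_ne i t) by auto.
        destruct (Nat.eqb_spec ((i - N) / (N - 1)) b); [|ring].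
        rewrite dl_ne; [ring|]. intros Hc. apply n0. unfold p in Hc.
        assert (Hm1 : ((i - N) mod (N - 1) = (t - N) mod (N - 1))%nat) by lia.
        assert (i - N = t - N)%nat.
        { rewrite (Nat.div_mod_eq (i - N) (N - 1)), (Nat.div_mod_eq (t - N) (N - 1)).
          rewrite e, Hm1. reflexivity. }
        lia. }
  rewrite HS in E. lra.
Qed.

Lemma step6 : U 0 0 = 0.
Proof.
  pose proof eq_row0 as E.
  rewrite (Rsum_ext N _ (fun _ => U 0 0)) in E.
  - rewrite Rsum_const in E. assert (0 < INR N) by (apply lt_0_INR; lia). nra.
  - intros j Hj. destruct (Nat.eq_dec j 0). subst; auto. rewrite head by lia. rewrite dl_eq. ring.
Qed.

Lemma witness_kernel c : (c < m * N)%nat -> u c = 0.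
Proof.
  intros Hc. assert (Hcm : (c mod m < m)%nat) by (apply Nat.mod_upper_bound; lia).
  assert (HcN : (c / m < N)%nat) by (apply Nat.Div0.div_lt_upper_bound; lia).
  replace (u c) with (U (c / m) (c mod m)).
  2:{ unfold U. f_equal. rewrite (Nat.div_mod_eq c m) at 3. lia. }
  set (j := (c / m)%nat) in *. set (i := (c mod m)%nat) in *.
  pose proof step6.
  destruct (Nat.eq_dec j 0) as [->|Hj].
  - destruct (Nat.eq_dec i 0) as [->|Hi]; auto.
    destruct (Nat.lt_ge_cases i N). apply step3; lia. apply step5; lia.
  - destruct (Nat.eq_dec i 0) as [->|Hi]. apply step1; lia.
    destruct (Nat.lt_ge_cases i N).
    + rewrite head by lia. rewrite H. ring.
    + rewrite step4 by lia. rewrite step5 by lia. ring.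
Qed.

End Witness.

Lemma Csum_ext K f g : (forall i, (i < K)%nat -> f i = g i) -> Csum K f = Csum K g.
Proof. induction K; simpl; intros H; auto. rewrite IHK, H; auto. Qed.

Lemma fcr_ext nr nc (M M' : cmat) : (forall r c, (r < nr)%nat -> (c < nc)%nat -> M r c = M' r c) ->
  full_column_rank nr nc M' -> full_column_rank nr nc M.
Proof.
  intros H HM v Hv. apply HM. intros row Hrow. rewrite <- (Hv row Hrow).
  apply Csum_ext. intros c Hc. rewrite H; auto.
Qed.

Lemma Csum_real m (a b : nat -> R) : Csum m (fun i => Cmul (a i, 0) (b i, 0)) = (Rsum m (fun i => a i * b i), 0).
Proof.
  induction m; simpl. reflexivity. rewrite IHm. unfold Cadd, Cmul; simpl. f_equal; ring.
Qed.

Definition Xc : cmat := fun i j => (Xw i j, 0).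
Definition Ac (m N : nat) : cmat := fun k i => (Aw m N k i, 0).

Lemma bigM_witness n m N (X A : cmat) r c :
  (0 < m)%nat -> (N <= m)%nat ->
  (forall i j, (i < m)%nat -> (j < N)%nat -> X i j = Xc i j) ->
  (forall k i, (k < n)%nat -> (i < m)%nat -> A k i = Ac m N k i) ->
  (r < 1 + n * (N - 1))%nat -> (c < m * N)%nat ->
  bigM n m N X A r c = (bmR m N r c, 0).
Proof.
  intros Hm HNm HX HA Hr Hc. unfold bigM, bmR.
  assert (Hcm : (c mod m < m)%nat) by (apply Nat.mod_upper_bound; lia).
  assert (HcN : (c / m < N)%nat) by (apply Nat.Div0.div_lt_upper_bound; lia).
  destruct (Nat.eqb_spec r 0).
  - rewrite HX by auto. unfold Xc, Cconj. simpl. f_equal. ring.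
  - assert (HN : (1 < N)%nat) by (destruct N as [|[|N']]; nia).
    assert (Hk : ((r - 1) / (N - 1) < n)%nat) by (apply Nat.Div0.div_lt_upper_bound; nia).
    assert (Hr' : ((r - 1) mod (N - 1) < N - 1)%nat) by (apply Nat.mod_upper_bound; lia).
    set (k := ((r - 1) / (N - 1))%nat) in *. set (r' := ((r - 1) mod (N - 1))%nat) in *.
    assert (Hrc : forall j, (j < N)%nat -> rowcol m (fun i => A k i) X j = (Aw m N k j, 0)).
    { intros j Hj. unfold rowcol.
      rewrite (Csum_ext m _ (fun i => Cmul (Aw m N k i, 0) (Xw i j, 0))).
      - rewrite Csum_real. f_equal. unfold Xw. rewrite (Rsum_ext m _ (fun i => dl i j * Aw m N k i)).
        apply Rsum_dl; lia. intros; ring.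
      - intros i Hi. rewrite HX, HA by lia. reflexivity. }
    unfold Dmat, Bmat. rewrite (HA k (c mod m)) by auto. unfold Ac.
    destruct (Nat.eqb (c / m) 0).
    + rewrite Hrc by lia. unfold Cmul, Copp. simpl. f_equal; ring.
    + destruct (Nat.eqb (c / m) (S r')).
      * rewrite Hrc by lia. unfold Cmul. simpl. f_equal; ring.
      * unfold Cmul, C0. simpl. f_equal; ring.
Qed.

Definition xs (n m N : nat) (p : nat) : R :=
  if Nat.ltb p (2 * (m * N)) then (if Nat.even p then Xw ((p / 2) mod m) ((p / 2) / m) else 0)
  else (if Nat.even (p - 2 * (m * N)) then Aw m N (((p - 2 * (m * N)) / 2) mod n) (((p - 2 * (m * N)) / 2) / n) else 0).

Lemma even_2 a : Nat.even (2 * a) = true.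
Proof. rewrite Nat.even_mul. reflexivity. Qed.
Lemma even_2S a : Nat.even (2 * a + 1) = false.
Proof. rewrite Nat.even_add, Nat.even_mul. reflexivity. Qed.
Lemma div2_2 a : ((2 * a) / 2 = a)%nat.
Proof. rewrite Nat.mul_comm. apply Nat.div_mul. lia. Qed.

Lemma decX_xs n m N i j : (0 < m)%nat -> (i < m)%nat -> (j < N)%nat -> decX m (xs n m N) i j = Xc i j.
Proof.
  intros Hm Hi Hj. unfold decX, xs, Xc.
  assert (Hb : (i + m * j < m * N)%nat) by nia.
  destruct (Nat.ltb_spec (2 * (i + m * j)) (2 * (m * N))); [|lia].
  destruct (Nat.ltb_spec (2 * (i + m * j) + 1) (2 * (m * N))); [|lia].
  rewrite even_2, even_2S, div2_2.
  replace ((i + m * j) mod m)%nat with i by (rewrite Nat.mul_comm, Nat.Div0.mod_add, Nat.mod_small; lia).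
  replace ((i + m * j) / m)%nat with j by (rewrite Nat.mul_comm, Nat.div_add, Nat.div_small; lia).
  reflexivity.
Qed.

Lemma decA_xs n m N k i : (0 < n)%nat -> (k < n)%nat -> (i < m)%nat -> decA n m N (xs n m N) k i = Ac m N k i.
Proof.
  intros Hn Hk Hi. unfold decA, xs, Ac.
  destruct (Nat.ltb_spec (2 * (m * N) + 2 * (k + n * i)) (2 * (m * N))); [lia|].
  destruct (Nat.ltb_spec (2 * (m * N) + 2 * (k + n * i) + 1) (2 * (m * N))); [lia|].
  replace (2 * (m * N) + 2 * (k + n * i) - 2 * (m * N))%nat with (2 * (k + n * i))%nat by lia.
  replace (2 * (m * N) + 2 * (k + n * i) + 1 - 2 * (m * N))%nat with (2 * (k + n * i) + 1)%nat by lia.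
  rewrite even_2, even_2S, div2_2.
  replace ((k + n * i) mod n)%nat with k by (rewrite Nat.mul_comm, Nat.Div0.mod_add, Nat.mod_small; lia).
  replace ((k + n * i) / n)%nat with i by (rewrite Nat.mul_comm, Nat.div_add, Nat.div_small; lia).
  reflexivity.
Qed.

Lemma witness_fcr n m N : (0 < n)%nat -> (0 < m)%nat -> (0 < N)%nat -> (m < n)%nat ->
  (n - 1 <= N * (n - m))%nat -> (N <= m)%nat ->
  full_column_rank (1 + n * (N - 1)) (m * N) (bigM n m N (decX m (xs n m N)) (decA n m N (xs n m N))).
Proof.
  intros Hn Hm HN Hmn Hcnt HNm.
  apply fcr_ext with (M' := fun r c => (bmR m N r c, 0)).
  { intros r c Hr Hc. apply bigM_witness; auto.
    - intros; apply decX_xs; auto.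
    - intros; apply decA_xs; auto. }
  intros v Hv c Hc.
  assert (Hf : forall row, (row < 1 + n * (N - 1))%nat ->
            Rsum (m * N) (fun c => bmR m N row c * fst (v c)) = 0 /\
            Rsum (m * N) (fun c => bmR m N row c * snd (v c)) = 0).
  { intros row Hrow. specialize (Hv row Hrow).
    assert (E1 : fst (Csum (m * N) (fun c => Cmul (bmR m N row c, 0) (v c))) = Rsum (m * N) (fun c => bmR m N row c * fst (v c))).
    { clear. generalize (m * N)%nat. intros K. induction K as [|K IH]; simpl; auto. rewrite IH. f_equal. ring. }
    assert (E2 : snd (Csum (m * N) (fun c => Cmul (bmR m N row c, 0) (v c))) = Rsum (m * N) (fun c => bmR m N row c * snd (v c))).
    { clear. generalize (m * N)%nat. intros K. induction K as [|K IH]; simpl; auto. rewrite IH. f_equal. ring. }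
    rewrite <- E1, <- E2, Hv. split; reflexivity. }
  destruct (Nat.eq_dec N 1) as [HN1|HN1].
  - subst N. assert (m = 1)%nat by lia. subst m.
    assert (c = 0)%nat by lia. subst c.
    destruct (Hf 0%nat ltac:(lia)) as [F1 F2]. simpl in F1, F2.
    unfold bmR, Xw, dl in F1, F2. simpl in F1, F2.
    rewrite (surjective_pairing (v 0%nat)). unfold C0. f_equal; lra.
  - assert (Hc2 : (m - N <= (N - 1) * (n - m - 1))%nat).
    { assert (H1 : (N * (n - m) = (N - 1) * (n - m) + (n - m))%nat).
      { replace N with (S (N - 1)) at 1 by lia. simpl. lia. }
      assert (H2 : ((N - 1) * (n - m) = (N - 1) * (n - m - 1) + (N - 1))%nat).
      { replace (n - m)%nat with (S (n - m - 1)) at 1 by lia. rewrite Nat.mul_succ_r. lia. }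
      lia. }
    rewrite (surjective_pairing (v c)). unfold C0. f_equal.
    + apply (witness_kernel n m N Hm ltac:(lia) HNm Hmn Hc2 (fun c => fst (v c))); auto.
      intros; apply Hf; auto.
    + apply (witness_kernel n m N Hm ltac:(lia) HNm Hmn Hc2 (fun c => snd (v c))); auto.
      intros; apply Hf; auto.
Qed.

From mathcomp Require all_boot all_algebra all_fingroup Rstruct zify.

Lemma fst_Csum K f : fst (Csum K f) = Rsum K (fun i => fst (f i)).
Proof. induction K; simpl; auto. rewrite IHK. reflexivity. Qed.
Lemma snd_Csum K f : snd (Csum K f) = Rsum K (fun i => snd (f i)).
Proof. induction K; simpl; auto. rewrite IHK. reflexivity. Qed.

Module MCpart.
Import all_boot all_fingroup all_algebra Rstruct zify GRing.Theory Num.Theory.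
Local Open Scope ring_scope.

Lemma Rsum_big K (f : nat -> R) : Rsum K f = \sum_(i < K) f i.
Proof.
  elim: K => [|K IH]; first by rewrite big_ord0.
  rewrite big_ord_recr /= IH. reflexivity.
Qed.

Lemma Poly_bigsum d (I : Type) (r : seq I) (P : pred I) (F : I -> (nat -> R) -> R) :
  (forall i, PolyR d (F i)) -> PolyR d (fun x => \sum_(i <- r | P i) F i x).
Proof.
  move=> H. elim: r => [|a r IH].
  - apply: (Poly_ext d (fun _ => 0%R)); first by constructor. by move=> x; rewrite big_nil.
  - case Pa: (P a).
    + apply: (Poly_ext d (fun x => Rplus (F a x) (\sum_(i <- r | P i) F i x))).
      by constructor. by move=> x; rewrite big_cons Pa.
    + apply: (Poly_ext d (fun x => \sum_(i <- r | P i) F i x)); first by [].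
      by move=> x; rewrite big_cons Pa.
Qed.

Lemma Poly_bigprod d (I : Type) (r : seq I) (P : pred I) (F : I -> (nat -> R) -> R) :
  (forall i, PolyR d (F i)) -> PolyR d (fun x => \prod_(i <- r | P i) F i x).
Proof.
  move=> H. elim: r => [|a r IH].
  - apply: (Poly_ext d (fun _ => 1%R)); first by constructor. by move=> x; rewrite big_nil.
  - case Pa: (P a).
    + apply: (Poly_ext d (fun x => Rmult (F a x) (\prod_(i <- r | P i) F i x))).
      by constructor. by move=> x; rewrite big_cons Pa.
    + apply: (Poly_ext d (fun x => \prod_(i <- r | P i) F i x)); first by [].
      by move=> x; rewrite big_cons Pa.
Qed.

Lemma Poly_det d k (A : (nat -> R) -> 'M[R]_k) :
  (forall i j, PolyR d (fun x => A x i j)) -> PolyR d (fun x => \det (A x)).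
Proof.
  move=> H. apply: Poly_bigsum => s.
  have H1 : PolyR d (fun x => \prod_i A x i (s i)) by apply: Poly_bigprod.
  have H2 := Pmul d _ _ (Pconst d ((-1) ^+ s)) H1.
  exact H2.
Qed.

Section Bridge.
Variables (nr nc : nat).

Definition mr (M : nat -> nat -> C) (i j : nat) : R :=
  if Nat.ltb i nr then (if Nat.ltb j nc then fst (M i j) else - snd (M i (j - nc)%nat))
  else (if Nat.ltb j nc then snd (M (i - nr)%nat j) else fst (M (i - nr)%nat (j - nc)%nat)).

Definition Mr (M : nat -> nat -> C) : 'M[R]_(nr + nr, nc + nc) := \matrix_(i, j) mr M i j.
Definition Gm (M : nat -> nat -> C) : 'M[R]_(nc + nc) := (Mr M)^T *m Mr M.

Lemma ltb_true a b : (a < b)%N -> Nat.ltb a b = true.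
Proof. move=> /ltP H. apply Nat.ltb_lt. lia. Qed.
Lemma ltb_false a b : (b <= a)%N -> Nat.ltb a b = false.
Proof. move=> /leP H. apply Nat.ltb_ge. lia. Qed.

Lemma bridge (M : nat -> nat -> C) (w : 'cV[R]_(nc + nc)) (v : nat -> C) :
  (forall c : 'I_nc, v c = (w (lshift nc c) 0, w (rshift nc c) 0)) ->
  forall r : 'I_nr,
    (Mr M *m w) (lshift nr r) 0 = fst (Csum nc (fun c => Cmul (M r c) (v c))) /\
    (Mr M *m w) (rshift nr r) 0 = snd (Csum nc (fun c => Cmul (M r c) (v c))).
Proof.
  move=> Hv r. rewrite fst_Csum snd_Csum !Rsum_big !mxE !big_split_ord /=.
  have Hr : (r < nr)%N by [].
  split.
  - rewrite -big_split /=. apply: eq_bigr => c _.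
    rewrite !mxE /mr /= (ltb_true _ _ Hr) (ltb_true _ _ (ltn_ord c)) ltb_false ?leq_addr //.
    rewrite Hv /=. rewrite addKn.
    by rewrite mulNr.
  - rewrite -big_split /=. apply: eq_bigr => c _.
    rewrite !mxE /mr /= (ltb_false (nr + r) nr) ?leq_addr // (ltb_true _ _ (ltn_ord c)) ltb_false ?leq_addr //.
    rewrite Hv /=. rewrite addKn. rewrite addKn.
    by rewrite addrC.
Qed.

Lemma rank_of_det (M : nat -> nat -> C) : \det (Gm M) != 0 -> full_column_rank nr nc M.
Proof.
  move=> Hdet v Hv c Hc.
  pose w : 'cV[R]_(nc + nc) := \col_j (if Nat.ltb j nc then fst (v j) else snd (v (j - nc)%nat)).
  have Hwv : forall c' : 'I_nc, v c' = (w (lshift nc c') 0, w (rshift nc c') 0).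
  { move=> c'. rewrite !mxE /= (ltb_true _ _ (ltn_ord c')) ltb_false ?leq_addr // addKn.
    by case: (v c'). }
  have HM : Mr M *m w = 0.
  { apply/matrixP => i j. rewrite [j]ord1 [RHS]mxE.
    case: (split_ordP i) => r ->; have [H1 H2] := bridge M w v Hwv r;
      rewrite ?H1 ?H2 Hv //; apply/ltP; exact: ltn_ord. }
  have HG : Gm M *m w = 0 by rewrite /Gm -mulmxA HM mulmx0.
  have Hu : Gm M \in unitmx by rewrite unitmxE unitfE.
  have Hw0 : w = 0 by rewrite -(mulKmx Hu w) HG mulmx0.
  have Hc' : (c < nc)%N by apply/ltP.
  rewrite (Hwv (Ordinal Hc')) Hw0 !mxE. reflexivity.
Qed.

Lemma det_of_rank (M : nat -> nat -> C) : full_column_rank nr nc M -> \det (Gm M) != 0.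
Proof.
  move=> Hfr. apply/negP => /det0P [u Hu0 HuG].
  pose w := u^T. pose y := Mr M *m w.
  have Hyy : y^T *m y = 0.
  { rewrite /y /w trmx_mul trmxK mulmxA -(mulmxA u) -/(Gm M) HuG mul0mx. reflexivity. }
  have Hy : forall i, y i 0 = 0.
  { move=> i. have E : (y^T *m y) 0 0 = 0 by rewrite Hyy mxE.
    rewrite mxE in E.
    have Hnn : forall k : 'I_(nr + nr), predT k -> 0 <= y^T 0 k * y k 0.
    { move=> k _. rewrite mxE -expr2. exact: sqr_ge0. }
    have Hi := @psumr_eq0P _ _ predT (fun k => y^T 0 k * y k 0) Hnn E i isT.
    rewrite /= mxE in Hi. move/eqP: Hi. rewrite mulf_eq0 orbb. by move/eqP. }
  pose v := fun c : nat => match (insub c : option 'I_nc) with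
              Some i => (w (lshift nc i) 0, w (rshift nc i) 0) | None => (0%R, 0%R) end.
  have Hwv : forall c' : 'I_nc, v c' = (w (lshift nc c') 0, w (rshift nc c') 0).
  { move=> c'. by rewrite /v valK. }
  have Hv : forall r, (r < nr)%coq_nat -> Csum nc (fun c => Cmul (M r c) (v c)) = Defs.C0.
  { move=> r /ltP Hr. have [H1 H2] := bridge M w v Hwv (Ordinal Hr).
    rewrite (surjective_pairing (Csum _ _)) -H1 -H2. by rewrite !Hy. }
  have Hz := Hfr v Hv.
  move/negP: Hu0. apply. apply/eqP/matrixP => i j. rewrite [i]ord1 mxE.
  have -> : u 0 j = w j 0 by rewrite mxE.
  case: (split_ordP j) => c ->; have := Hz c (elimT ltP (ltn_ord c)); rewrite Hwv; by case.
Qed.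

Lemma Poly_Mr d (M : (nat -> R) -> nat -> nat -> C) :
  (forall r c, (r < nr)%coq_nat -> (c < nc)%coq_nat -> CPoly d (fun x => M x r c)) ->
  forall (i : 'I_(nr + nr)) (j : 'I_(nc + nc)), PolyR d (fun x => Mr (M x) i j).
Proof.
  move=> H i j. apply: (Poly_ext d (fun x => mr (M x) i j)); last by move=> x; rewrite mxE.
  rewrite /mr. have Hi := ltn_ord i. have Hj := ltn_ord j.
  case: (Nat.ltb_spec i nr) => Hi'; case: (Nat.ltb_spec j nc) => Hj'.
  - by case: (H i j Hi' Hj').
  - apply: Poly_opp. apply: (proj2 (H _ _ Hi' _)). move/ltP: Hj. lia.
  - apply: (proj2 (H _ _ _ Hj')). move/ltP: Hi. lia.
  - apply: (proj1 (H _ _ _ _)). move/ltP: Hi. lia. move/ltP: Hj. lia.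
Qed.

Lemma Poly_Gdet d (M : (nat -> R) -> nat -> nat -> C) :
  (forall r c, (r < nr)%coq_nat -> (c < nc)%coq_nat -> CPoly d (fun x => M x r c)) ->
  PolyR d (fun x => \det (Gm (M x))).
Proof.
  move=> H. apply: Poly_det => i j.
  apply: (Poly_ext d (fun x => \sum_k (Mr (M x) k i * Mr (M x) k j))); last first.
  { move=> x. rewrite /Gm mxE. apply: eq_bigr => k _. by rewrite !mxE. }
  apply: Poly_bigsum => k.
  have H1 := Pmul d _ _ (Poly_Mr d M H k i) (Poly_Mr d M H k j). exact H1.
Qed.


Definition Pdet (M : nat -> nat -> C) : R := \det (Gm M).

Lemma rank_of_Pdet (M : nat -> nat -> C) : Pdet M <> 0 -> full_column_rank nr nc M.
Proof. move=> H. apply: rank_of_det. by apply/eqP. Qed.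

Lemma Pdet_of_rank (M : nat -> nat -> C) : full_column_rank nr nc M -> Pdet M <> 0.
Proof. move=> H. apply/eqP. exact: det_of_rank. Qed.

Lemma Poly_Pdet d (M : (nat -> R) -> nat -> nat -> C) :
  (forall r c, (r < nr)%coq_nat -> (c < nc)%coq_nat -> CPoly d (fun x => M x r c)) ->
  PolyR d (fun x => Pdet (M x)).
Proof. exact: Poly_Gdet. Qed.

End Bridge.
End MCpart.

Theorem claim1 (n m N : nat) :
  (0 < n)%nat -> (0 < m)%nat -> (0 < N)%nat -> (m < n)%nat ->
  (n - 1 <= N * (n - m))%nat -> (N <= m)%nat ->
  lebesgue_null (2 * (m * N) + 2 * (n * m))
    (fun x => ~ full_column_rank (1 + n * (N - 1)) (m * N)
                  (bigM n m N (decX m x) (decA n m N x))).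
Proof.
  intros Hn Hm HN Hmn Hc HNm.
  set (d := (2 * (m * N) + 2 * (n * m))%nat).
  set (nr := (1 + n * (N - 1))%nat). set (nc := (m * N)%nat).
  set (Mx := fun x => bigM n m N (decX m x) (decA n m N x)).
  apply null_mono with (F := fun x => MCpart.Pdet nr nc (Mx x) = 0).
  { intros x Hbad. destruct (Req_dec (MCpart.Pdet nr nc (Mx x)) 0) as [E|E]; auto.
    exfalso. apply Hbad. apply (MCpart.rank_of_Pdet nr nc). exact E. }
  assert (HP : PolyR d (fun x => MCpart.Pdet nr nc (Mx x))).
  { apply MCpart.Poly_Pdet. intros r c Hr Hc'. unfold Mx, d. apply CPoly_bigM; auto. }
  assert (Hd : d = S (d - 1)) by (unfold d; nia).
  rewrite Hd in HP |- *. apply poly_null; auto.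
  exists (xs n m N). apply (MCpart.Pdet_of_rank nr nc). unfold Mx.
  apply witness_fcr; auto.
Qed.
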